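(* Let $\alpha_1,\alpha_2,\beta_2,\beta_3,\beta_4,\delta_1,\delta_2,\delta_4>0$, $\rho>0$, and $i\in C(\mathbb{R}_+,[0,i_M])$ $\rho$-periodic with $\frac1\rho\int_0^\rho i=1$. Consider the system $$u_1'=u_1(1-u_1-\alpha_1u_2-\delta_1u_3),\quad u_2'=\beta_2u_2(1-u_2-\alpha_2u_1-\delta_2u_4),\quad u_3'=\beta_3(u_2-u_3),\quad u_4'=\beta_4(i(t)-u_4-\delta_4u_4u_2).$$ Let $w$ be the unique $\rho$-periodic solution of $w'=\beta_4(i(t)-w)$. Then $(1,0,0,w(t))$ is a $\rho$-periodic solution of the system; it is (uniformly) asymptotically stable if $\alpha_2+\delta_2>1$ and unstable if $\alpha_2+\delta_2<1$.
   Context: $\mathbb{R}_+=[0,\infty)$. Stability/instability is in the Lyapunov sense. *)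

(* Defs.v *)
From Stdlib Require Import Reals List.
From Coquelicot Require Import Coquelicot.
Open Scope R_scope.

Definition state := (R * R * R * R)%type.
Definition c1 (x : state) : R := let '(a, _, _, _) := x in a.
Definition c2 (x : state) : R := let '(_, a, _, _) := x in a.
Definition c3 (x : state) : R := let '(_, _, a, _) := x in a.
Definition c4 (x : state) : R := let '(_, _, _, a) := x in a.
Definition comps : list (state -> R) := c1 :: c2 :: c3 :: c4 :: nil.

(* max-norm distance on R^4 (all norms on R^4 are equivalent) *)
Definition ndist (x y : state) : R :=
  Rmax (Rmax (Rabs (c1 x - c1 y)) (Rabs (c2 x - c2 y)))
       (Rmax (Rabs (c3 x - c3 y)) (Rabs (c4 x - c4 y))).

Definition is_sol (f : R -> state -> state) (t0 : R) (T : Rbar) (x : R -> state) : Prop :=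
  forall c, In c comps ->
    (forall t, t0 < t -> Rbar_lt t T -> is_derive (fun s => c (x s)) t (c (f t (x t)))) /\
    filterlim (fun s => c (x s)) (at_right t0) (locally (c (x t0))).

Definition lyap_stable (f : R -> state -> state) (p : R -> state) : Prop :=
  forall eps, 0 < eps -> forall t0, 0 <= t0 -> exists delta, 0 < delta /\
    forall x0, ndist x0 (p t0) < delta ->
      (exists x, is_sol f t0 p_infty x /\ x t0 = x0) /\
      (forall x, is_sol f t0 p_infty x -> x t0 = x0 ->
         forall t, t0 <= t -> ndist (x t) (p t) < eps).

Definition unif_stable (f : R -> state -> state) (p : R -> state) : Prop :=
  forall eps, 0 < eps -> exists delta, 0 < delta /\ forall t0, 0 <= t0 ->
    forall x0, ndist x0 (p t0) < delta ->
      (exists x, is_sol f t0 p_infty x /\ x t0 = x0) /\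
      (forall x, is_sol f t0 p_infty x -> x t0 = x0 ->
         forall t, t0 <= t -> ndist (x t) (p t) < eps).

Definition unif_asym_stable (f : R -> state -> state) (p : R -> state) : Prop :=
  unif_stable f p /\
  exists eta, 0 < eta /\
    (forall t0 x0, 0 <= t0 -> ndist x0 (p t0) < eta ->
       exists x, is_sol f t0 p_infty x /\ x t0 = x0) /\
    (forall eps, 0 < eps -> exists T, 0 < T /\
       forall t0, 0 <= t0 -> forall x, is_sol f t0 p_infty x ->
         ndist (x t0) (p t0) < eta ->
         forall t, t0 + T <= t -> ndist (x t) (p t) < eps).

Definition lyap_unstable (f : R -> state -> state) (p : R -> state) : Prop :=
  ~ lyap_stable f p.

Definition sysF (a1 a2 b2 b3 b4 d1 d2 d4 : R) (i : R -> R) (t : R) (x : state) : state :=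
  let '(u1, u2, u3, u4) := x in
  (u1 * (1 - u1 - a1 * u2 - d1 * u3),
   b2 * u2 * (1 - u2 - a2 * u1 - d2 * u4),
   b3 * (u2 - u3),
   b4 * (i t - u4 - d4 * u4 * u2)).

(* Main.v *)
Require Import Defs.
From Stdlib Require Import Reals List.
From Coquelicot Require Import Coquelicot.
Open Scope R_scope.
From Stdlib Require Import Lra Psatz ZArith.
Import Defs.

Lemma ball_R (x y e : R) : ball x e y <-> Rabs (y - x) < e.
Proof. unfold ball; simpl; unfold AbsRing_ball, abs, minus, plus, opp; simpl. tauto. Qed.

Section Lims.
Context {T : Type} {F : (T -> Prop) -> Prop} {FF : Filter F}.

Lemma lim_plus (f g : T -> R) a b :
  filterlim f F (locally a) -> filterlim g F (locally b) ->
  filterlim (fun s => f s + g s) F (locally (a + b)).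
Proof. intros Hf Hg. eapply filterlim_comp_2; [exact Hf|exact Hg|].
  exact (@filterlim_plus R_AbsRing R_NormedModule a b). Qed.

Lemma lim_mult (f g : T -> R) a b :
  filterlim f F (locally a) -> filterlim g F (locally b) ->
  filterlim (fun s => f s * g s) F (locally (a * b)).
Proof. intros Hf Hg. eapply filterlim_comp_2; [exact Hf|exact Hg|].
  exact (@filterlim_mult R_AbsRing a b). Qed.

Lemma lim_const (a : R) : filterlim (fun _ : T => a) F (locally a).
Proof. apply filterlim_const. Qed.

Lemma lim_comp (f : T -> R) (h : R -> R) a :
  filterlim f F (locally a) -> continuous h a ->
  filterlim (fun s => h (f s)) F (locally (h a)).
Proof. intros Hf Hh. eapply filterlim_comp; eauto. Qed.

Lemma lim_opp (f : T -> R) a :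
  filterlim f F (locally a) -> filterlim (fun s => - f s) F (locally (- a)).
Proof. intros Hf. apply (lim_comp f Ropp a Hf).
  exact (@filterlim_opp R_AbsRing R_NormedModule a). Qed.

Lemma lim_minus (f g : T -> R) a b :
  filterlim f F (locally a) -> filterlim g F (locally b) ->
  filterlim (fun s => f s - g s) F (locally (a - b)).
Proof. intros Hf Hg. apply lim_plus; auto. apply lim_opp; auto. Qed.

Lemma lim_ext (f g : T -> R) a :
  (forall s, f s = g s) -> filterlim f F (locally a) -> filterlim g F (locally a).
Proof. intros E H. eapply filterlim_ext; eauto. Qed.
End Lims.

Definition rc (f : R -> R) (t0 : R) := filterlim f (at_right t0) (locally (f t0)).

Lemma cont_rc f t : continuous f t -> rc f t.
Proof. intros H. unfold rc. eapply filterlim_filter_le_1; [apply filter_le_within|exact H]. Qed.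

Lemma rc_eps f t0 : rc f t0 -> forall eps, 0 < eps -> exists d, 0 < d /\
  forall y, t0 < y < t0 + d -> Rabs (f y - f t0) < eps.
Proof. intros H eps Heps. destruct (proj1 (filterlim_locally _ _) H (mkposreal eps Heps)) as [d Hd].
  exists d; split; [apply cond_pos|]. intros y Hy. apply ball_R. apply Hd; [|lra].
  apply ball_R. rewrite Rabs_right; lra. Qed.

Lemma cont_eps f t : continuous f t -> forall eps, 0 < eps -> exists d, 0 < d /\
  forall y, Rabs (y - t) < d -> Rabs (f y - f t) < eps.
Proof. intros H eps Heps. destruct (proj1 (filterlim_locally _ _) H (mkposreal eps Heps)) as [d Hd].
  exists d; split; [apply cond_pos|]. intros y Hy. apply ball_R. apply Hd. apply ball_R. auto. Qed.

Lemma dec_lemma (f df : R -> R) t0 t : t0 <= t ->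
  (forall s, t0 < s <= t -> is_derive f s (df s)) ->
  (forall s, t0 < s < t -> df s <= 0) -> rc f t0 -> f t <= f t0.
Proof.
  intros Ht Hder Hn Hrc. destruct (Req_dec t0 t) as [->|Hne]; [lra|].
  apply Rnot_lt_le; intro Hlt.
  destruct (rc_eps f t0 Hrc (f t - f t0) ltac:(lra)) as [d [Hd0 Hd]].
  set (s := Rmin (t0 + d/2) ((t0 + t)/2)).
  assert (Hs1 : t0 < s) by (unfold s; apply Rmin_case; lra).
  assert (Hs2 : s < t) by (unfold s; apply Rmin_case_strong; intros; lra).
  assert (Hs3 : s < t0 + d) by (unfold s; apply Rmin_case_strong; intros; lra).
  specialize (Hd s ltac:(lra)).
  destruct (MVT_cor2 f df s t Hs2) as [c [Hc1 Hc2]].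
  { intros c Hc. apply is_derive_Reals. apply Hder. lra. }
  assert (df c <= 0) by (apply Hn; lra).
  assert (df c * (t - s) <= 0) by (apply Rmult_le_0_r; lra).
  apply Rabs_lt_between in Hd. lra.
Qed.

Lemma deriv_eq (f : R -> R) (x l1 l2 : R) : is_derive f x l1 -> l1 = l2 -> is_derive f x l2.
Proof. intros H ->; auto. Qed.

Lemma cont_expl a t0 s : continuous (fun s => exp (a * (s - t0))) s.
Proof. apply (@ex_derive_continuous R_AbsRing R_NormedModule); auto_derive; auto. Qed.

Lemma der_expl a t0 s : is_derive (fun s => exp (a * (s - t0))) s (a * exp (a * (s - t0))).
Proof. auto_derive; auto. unfold Rminus; ring. Qed.

Lemma der_mult (f g : R -> R) (x df dg : R) : is_derive f x df -> is_derive g x dg ->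
  is_derive (fun s => f s * g s) x (df * g x + f x * dg).
Proof. intros Hf Hg. apply (is_derive_mult f g x df dg Hf Hg). intros; apply Rmult_comm. Qed.

Lemma der_plus (f g : R -> R) (x df dg : R) : is_derive f x df -> is_derive g x dg ->
  is_derive (fun s => f s + g s) x (df + dg).
Proof. intros Hf Hg. apply (is_derive_plus f g x df dg Hf Hg). Qed.

Lemma der_minus (f g : R -> R) (x df dg : R) : is_derive f x df -> is_derive g x dg ->
  is_derive (fun s => f s - g s) x (df - dg).
Proof. intros Hf Hg. apply (is_derive_minus f g x df dg Hf Hg). Qed.

Lemma der_scal (f : R -> R) (x k df : R) : is_derive f x df ->
  is_derive (fun s => k * f s) x (k * df).
Proof. intros Hf. eapply deriv_eq. apply (der_mult (fun _ => k) f). apply is_derive_const. exact Hf. unfold zero; simpl; ring. Qed.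

Lemma der_exp_comp (f : R -> R) (x df : R) : is_derive f x df ->
  is_derive (fun s => exp (f s)) x (df * exp (f x)).
Proof. intros Hf. eapply deriv_eq. apply (is_derive_comp exp f x). apply is_derive_Reals, derivable_pt_lim_exp. exact Hf.
  simpl. reflexivity. Qed.

Lemma der_sq (f : R -> R) (x df : R) : is_derive f x df ->
  is_derive (fun s => f s * f s) x (2 * f x * df).
Proof. intros Hf. apply (deriv_eq _ _ _ _ (der_mult f f x df df Hf Hf)). ring. Qed.

Lemma GL0 (W dW : R -> R) a t0 t : t0 <= t ->
 (forall s, t0 < s <= t -> is_derive W s (dW s)) ->
 (forall s, t0 < s < t -> dW s <= - a * W s) ->
 rc W t0 -> W t <= W t0 * exp (- a * (t - t0)).
Proof.
  intros Ht Hd Hn Hrc.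
  pose (U := fun s => W s * exp (a * (s - t0))).
  assert (HU : U t <= U t0).
  { apply (dec_lemma U (fun s => dW s * exp (a * (s - t0)) + W s * (a * exp (a * (s - t0)))) t0 t Ht).
    - intros s Hs. apply (der_mult W (fun s => exp (a * (s - t0)))); [auto|apply der_expl].
    - intros s Hs. specialize (Hn s Hs). pose proof (exp_pos (a * (s - t0))).
      assert (dW s + a * W s <= 0) by lra. nra.
    - unfold rc, U. apply lim_mult. exact Hrc. apply (cont_rc (fun s => exp (a * (s - t0)))), cont_expl. }
  unfold U in HU. replace (t0 - t0) with 0 in HU by ring. rewrite Rmult_0_r, exp_0, Rmult_1_r in HU.
  replace (W t) with (W t * exp (a * (t - t0)) * exp (- a * (t - t0))).
  2:{ rewrite Rmult_assoc, <- exp_plus. replace (a * (t - t0) + - a * (t - t0)) with 0 by ring. rewrite exp_0; ring. }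
  apply Rmult_le_compat_r; [left; apply exp_pos| exact HU].
Qed.

Lemma GL (V dV : R -> R) a c beta t0 t : 0 < beta < a -> 0 <= c -> t0 <= t -> 0 <= V t0 ->
 (forall s, t0 < s <= t -> is_derive V s (dV s)) ->
 (forall s, t0 < s < t -> dV s <= - a * V s + c * exp (- beta * (s - t0))) ->
 rc V t0 -> V t <= (V t0 + c / (a - beta)) * exp (- beta * (t - t0)).
Proof.
  intros Hb Hc Ht HV0 Hd Hn Hrc.
  set (k := c / (a - beta)).
  assert (Hk : 0 <= k) by (unfold k; apply Rdiv_le_0_compat; lra).
  pose (W := fun s => V s - k * exp (- beta * (s - t0))).
  assert (HW : W t <= W t0 * exp (- a * (t - t0))).
  { apply (GL0 W (fun s => dV s - k * (- beta * exp (- beta * (s - t0)))) a t0 t Ht).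
    - intros s Hs. apply (der_minus V (fun s => k * exp (- beta * (s - t0)))); [auto|]. apply (der_scal (fun s => exp (- beta * (s - t0)))), der_expl.
    - intros s Hs. specialize (Hn s Hs). unfold W.
      assert (E : c = k * (a - beta)) by (unfold k; field; lra).
      rewrite E in Hn. nra.
    - unfold rc, W. apply lim_minus. exact Hrc. apply lim_mult. apply lim_const. apply (cont_rc (fun s => exp (- beta * (s - t0)))), cont_expl. }
  unfold W in HW. replace (t0 - t0) with 0 in HW by ring. rewrite Rmult_0_r, exp_0 in HW.
  assert (E1 : exp (- a * (t - t0)) <= exp (- beta * (t - t0))).
  { destruct (Req_dec t t0) as [->|]; [replace (t0 - t0) with 0 by ring; rewrite !Rmult_0_r; right; reflexivity|]. left; apply exp_increasing. nra. }
  pose proof (exp_pos (- a * (t - t0))). pose proof (exp_pos (- beta * (t - t0))).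
  destruct (Rle_dec 0 (V t0 - k * 1)); nra.
Qed.

Lemma grow_lemma (Z dZ : R -> R) a t0 t : t0 <= t ->
 (forall s, t0 < s <= t -> is_derive Z s (dZ s)) ->
 (forall s, t0 < s < t -> a * Z s <= dZ s) ->
 rc Z t0 -> Z t0 * exp (a * (t - t0)) <= Z t.
Proof.
  intros Ht Hd Hn Hrc.
  assert (H := GL0 (fun s => - Z s) (fun s => - dZ s) (- a) t0 t Ht).
  assert (H' : - Z t <= - Z t0 * exp (- - a * (t - t0))).
  { apply H. intros; apply (is_derive_opp Z); auto. intros s Hs; specialize (Hn s Hs); lra.
    unfold rc. apply lim_opp. exact Hrc. }
  replace (- - a) with a in H' by ring. lra.
Qed.

Lemma rc_of_eps f t0 : (forall eps, 0 < eps -> exists d, 0 < d /\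
  forall y, t0 < y < t0 + d -> Rabs (f y - f t0) < eps) -> rc f t0.
Proof. intros H. unfold rc. apply filterlim_locally. intros [eps Heps].
  destruct (H eps Heps) as [d [Hd Hdd]]. exists (mkposreal d Hd). intros y Hy Hy2.
  pose proof (proj1 (ball_R t0 y d) Hy) as Hy3. apply Hdd. apply Rabs_lt_between in Hy3. lra. Qed.

Lemma cont_of_eps f t : (forall eps, 0 < eps -> exists d, 0 < d /\
  forall y, Rabs (y - t) < d -> Rabs (f y - f t) < eps) -> continuous f t.
Proof. intros H. apply filterlim_locally. intros [eps Heps].
  destruct (H eps Heps) as [d [Hd Hdd]]. exists (mkposreal d Hd). intros y Hy.
  apply ball_R in Hy. apply ball_R. simpl in *. apply Hdd. auto. Qed.

Lemma ex_nat_above (t r : R) : 0 < r -> exists n : nat, t <= INR n * r.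
Proof. intros Hr. destruct (archimed (t / r)) as [H1 _].
  exists (Z.to_nat (up (t / r))). destruct (Z_le_gt_dec 0 (up (t/r))) as [Hz|Hz].
  - rewrite INR_IZR_INZ, Z2Nat.id by auto.
    apply Rmult_lt_compat_r with (r := r) in H1; auto. unfold Rdiv in H1.
    rewrite Rmult_assoc, Rinv_l, Rmult_1_r in H1 by lra. lra.
  - assert (IZR (up (t/r)) <= -1). { apply IZR_le. lia. }
    assert (Hq : t / r < -1) by lra. assert (t < - r).
    { apply Rmult_lt_compat_r with (r := r) in Hq; auto. unfold Rdiv in Hq.
      rewrite Rmult_assoc, Rinv_l, Rmult_1_r in Hq by lra. lra. }
    pose proof (pos_INR (Z.to_nat (up (t / r)))). nra.
Qed.

Lemma Rmax0_lip y s : Rabs (Rmax y 0 - Rmax s 0) <= Rabs (y - s).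
Proof. unfold Rmax. destruct (Rle_dec y 0); destruct (Rle_dec s 0);
  unfold Rabs; repeat match goal with |- context [Rcase_abs ?x] => destruct (Rcase_abs x) end; lra. Qed.

Lemma rc_cont_from_der f t0 : rc f t0 -> (forall s, t0 < s -> ex_derive f s) ->
  forall s, t0 < s -> continuous f s.
Proof. intros _ H s Hs. apply (@ex_derive_continuous R_AbsRing R_NormedModule). auto. Qed.

Lemma rc_id t : rc (fun s => s) t.
Proof. apply cont_rc. apply continuous_id. Qed.

Lemma exp_mono x y : x <= y -> exp x <= exp y.
Proof. intros [H|H]. left; apply exp_increasing; auto. subst; lra. Qed.

Lemma L_e1 e1 e2 e3 a1 d1 : Rabs e1 <= 1/2 ->
  2 * e1 * (1 + e1) * (- e1 - a1 * e2 - d1 * e3) <= -(1/2) * (e1 * e1) + 9 * (a1 * a1) * (e2 * e2) + 9 * (d1 * d1) * (e3 * e3).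
Proof.
  intros H. apply Rabs_le_between in H. set (q := 1 + e1).
  assert (Hq : 1/2 <= q <= 3/2) by (unfold q; lra).
  assert (A : - 2 * (q * e1) * (a1 * e2) <= (q * e1) * (q * e1) / 9 + 9 * (a1 * e2) * (a1 * e2)).
  { pose proof (Rle_0_sqr (q * e1 / 3 + 3 * (a1 * e2))). unfold Rsqr in *. nra. }
  assert (B : - 2 * (q * e1) * (d1 * e3) <= (q * e1) * (q * e1) / 9 + 9 * (d1 * e3) * (d1 * e3)).
  { pose proof (Rle_0_sqr (q * e1 / 3 + 3 * (d1 * e3))). unfold Rsqr in *. nra. }
  assert (C : (q * e1) * (q * e1) <= 9/4 * (e1 * e1)).
  { replace ((q * e1) * (q * e1)) with ((q * q) * (e1 * e1)) by ring. apply Rmult_le_compat_r. nra. nra. }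
  assert (D : - 2 * q * (e1 * e1) <= - (e1 * e1)) by nra.
  replace (2 * e1 * (1 + e1) * (- e1 - a1 * e2 - d1 * e3)) with
    (- 2 * q * (e1 * e1) + (- 2 * (q * e1) * (a1 * e2)) + (- 2 * (q * e1) * (d1 * e3))) by (unfold q; ring).
  nra.
Qed.

Lemma L_e4 e4 b4 d4 u4 u2 : 0 < b4 ->
  2 * e4 * (b4 * (- e4 - d4 * u4 * u2)) <= - b4 * (e4 * e4) + b4 * (d4 * d4) * (u4 * u4) * (u2 * u2).
Proof. intros H. pose proof (Rle_0_sqr (e4 + d4 * u4 * u2)). unfold Rsqr in *. nra. Qed.

Lemma L_e3 u3 u2 b3 : 0 < b3 ->
  2 * u3 * (b3 * (u2 - u3)) <= - b3 * (u3 * u3) + b3 * (u2 * u2).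
Proof. intros H. pose proof (Rle_0_sqr (u2 - u3)). unfold Rsqr in *. nra. Qed.

Lemma abs_sq_le a b : Rabs a <= b -> a * a <= b * b.
Proof. intros H. pose proof (Rabs_pos a). apply Rabs_le_between in H. nra. Qed.

Lemma prod_lip a b a' b' A Bd : Rabs a <= A -> Rabs b' <= Bd ->
  Rabs (a * b - a' * b') <= A * Rabs (b - b') + Bd * Rabs (a - a').
Proof.
  intros Ha Hb. replace (a * b - a' * b') with (a * (b - b') + b' * (a - a')) by ring.
  eapply Rle_trans. apply Rabs_triang. rewrite !Rabs_mult.
  apply Rplus_le_compat; apply Rmult_le_compat; auto; try apply Rabs_pos; lra.
Qed.

Lemma sq_abs_le a b : 0 <= b -> a * a <= b * b -> Rabs a <= b.
Proof. intros Hb H. apply Rabs_le. split; nra. Qed.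

Lemma lin2 A Bq X x Y y : 0 <= A -> 0 <= Bq -> X <= x -> Y <= y -> A * X + Bq * Y <= A * x + Bq * y.
Proof. intros. apply Rplus_le_compat; apply Rmult_le_compat_l; auto. Qed.

Lemma Rmax_eq x y : Rmax x y = (x + y + Rabs (x - y)) / 2.
Proof. unfold Rmax, Rabs. destruct (Rle_dec x y); destruct (Rcase_abs (x - y)); lra. Qed.

Lemma lim_Rmax {T} {F : (T -> Prop) -> Prop} {FF : Filter F} (f g : T -> R) a b :
  filterlim f F (locally a) -> filterlim g F (locally b) ->
  filterlim (fun s => Rmax (f s) (g s)) F (locally (Rmax a b)).
Proof.
  intros Hf Hg. rewrite Rmax_eq. apply (lim_ext (fun s => (f s + g s + Rabs (f s - g s)) * / 2)).
  intros; rewrite Rmax_eq; reflexivity.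
  apply lim_mult. apply lim_plus. apply lim_plus; auto. apply (lim_comp (fun s => f s - g s) Rabs).
  apply lim_minus; auto. apply continuous_Rabs. apply lim_const.
Qed.

Lemma lim_Rabs {T} {F : (T -> Prop) -> Prop} {FF : Filter F} (f : T -> R) a :
  filterlim f F (locally a) -> filterlim (fun s => Rabs (f s)) F (locally (Rabs a)).
Proof. intros Hf. apply (lim_comp f Rabs); auto. apply continuous_Rabs. Qed.


Definition cont_from (g : R -> R) t0 := rc g t0 /\ forall s, t0 < s -> continuous g s.

Lemma boot g t0 r : 0 < r -> cont_from g t0 -> g t0 < r ->
 (forall T, t0 <= T -> (forall s, t0 <= s <= T -> g s <= r) -> forall s, t0 <= s <= T -> g s <= r/2) ->
 forall t, t0 <= t -> g t <= r/2.
Proof.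
  intros Hr [Hrc Hct] Hg0 Hyp t Ht. apply Rnot_lt_le; intro Hbad.
  pose (E := fun T => t0 <= T /\ forall s, t0 <= s <= T -> g s <= r).
  assert (HEub : forall T, E T -> T < t).
  { intros T [HT1 HT2]. apply Rnot_le_lt; intro. assert (g t <= r/2) by (apply (Hyp T); auto; lra). lra. }
  assert (HE0 : E t0). { split; [lra|]. intros s Hs. replace s with t0 by lra. lra. }
  destruct (completeness E) as [S [HSub HSlub]].
  { exists t. intros T HT. left. apply HEub; auto. }
  { exists t0; auto. }
  assert (HS0 : t0 <= S) by (apply HSub; auto).
  assert (Hbelow : forall s, t0 <= s < S -> g s <= r/2).
  { intros s Hs. destruct (Classical_Prop.classic (exists T, E T /\ s < T)) as [[T [HT Hs2]]|Hno].
    - destruct HT as [HT1 HT2]. apply (Hyp T HT1 HT2). lra.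
    - assert (S <= s). { apply HSlub. intros T HT. apply Rnot_lt_le. intro. apply Hno. exists T; auto. }
      lra. }
  assert (HS : g S <= r).
  { destruct (Req_dec S t0) as [->|HSne]; [lra|].
    apply Rnot_lt_le; intro HgS.
    destruct (cont_eps g S (Hct S ltac:(lra)) (g S - r/2) ltac:(lra)) as [d [Hd Hdd]].
    set (s := Rmax t0 (S - d/2)).
    assert (Hs1 : t0 <= s) by (unfold s; apply Rmax_l).
    assert (Hs2 : s < S) by (unfold s; apply Rmax_case_strong; intros; lra).
    assert (Hs3 : Rabs (s - S) < d).
    { unfold s; apply Rmax_case_strong; intros; rewrite Rabs_left; lra. }
    specialize (Hdd s Hs3). specialize (Hbelow s ltac:(lra)). apply Rabs_lt_between in Hdd. lra. }
  assert (HES : E S). { split; [lra|]. intros s Hs. destruct (Req_dec s S) as [->|]; [lra|]. specialize (Hbelow s ltac:(lra)). lra. }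
  assert (HS2 : g S <= r/2) by (apply (Hyp S HS0 (proj2 HES)); lra).
  assert (Hnext : exists d, 0 < d /\ forall y, S <= y < S + d -> g y < r).
  { destruct (Req_dec S t0) as [->|HSne].
    - destruct (rc_eps g t0 Hrc (r - g t0) ltac:(lra)) as [d [Hd Hdd]].
      exists d; split; auto. intros y Hy. destruct (Req_dec y t0) as [->|]; [lra|].
      specialize (Hdd y ltac:(lra)). apply Rabs_lt_between in Hdd. lra.
    - destruct (cont_eps g S (Hct S ltac:(lra)) (r - g S) ltac:(lra)) as [d [Hd Hdd]].
      exists d; split; auto. intros y Hy. assert (Rabs (y - S) < d) by (rewrite Rabs_right; lra).
      specialize (Hdd y H). apply Rabs_lt_between in Hdd. lra. }
  destruct Hnext as [d [Hd Hdd]].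
  assert (E (S + d/2)).
  { split; [lra|]. intros s Hs. destruct (Rle_dec s S). apply (proj2 HES); lra. left; apply Hdd; lra. }
  assert (S + d/2 <= S) by (apply HSub; auto). lra.
Qed.


Definition contR (f : R -> R) := forall s, continuous f s.

Lemma exR f a b : contR f -> ex_RInt f a b.
Proof. intros H. apply (@ex_RInt_continuous R_CompleteNormedModule). intros; apply H. Qed.

Lemma RInt_der f a s : contR f -> is_derive (fun t => RInt f a t) s (f s).
Proof. intros H. apply (is_derive_RInt f (fun t => RInt f a t) a s).
  exists (mkposreal 1 Rlt_0_1). intros; apply (@RInt_correct R_CompleteNormedModule), exR; auto. apply H. Qed.

Lemma RInt_cont f a : contR f -> contR (fun t => RInt f a t).
Proof. intros H s. apply (@ex_derive_continuous R_AbsRing R_NormedModule). eexists. apply RInt_der; auto. Qed.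

Lemma RInt_diff f a s t : contR f -> RInt f a s - RInt f a t = RInt f t s.
Proof. intros H. rewrite <- (RInt_Chasles f a t s) by (apply exR; auto). unfold plus; simpl. ring. Qed.

Lemma RInt_absbound f a b M : contR f -> (forall u, Rabs (f u) <= M) -> Rabs (RInt f a b) <= M * Rabs (b - a).
Proof.
  intros H HM. destruct (Rle_dec a b).
  - rewrite (Rabs_right (b - a)) by lra. rewrite Rmult_comm. apply abs_RInt_le_const; auto. apply exR; auto.
  - rewrite <- (opp_RInt_swap f b a) by (apply exR; auto). unfold opp; simpl. rewrite Rabs_Ropp.
    rewrite (Rabs_left (b - a)) by lra. replace (- (b - a)) with (a - b) by ring. rewrite Rmult_comm.
    apply abs_RInt_le_const; [lra| apply exR; auto| auto].
Qed.

Lemma contR_minus f g : contR f -> contR g -> contR (fun s => f s - g s).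
Proof. intros Hf Hg s. unfold continuous. apply lim_minus; [apply Hf|apply Hg]. Qed.

Lemma RInt_minus' f g a b : contR f -> contR g -> RInt (fun s => f s - g s) a b = RInt f a b - RInt g a b.
Proof. intros Hf Hg. apply (RInt_minus f g a b); apply exR; auto. Qed.

Lemma RInt_abs_le f g a b : contR f -> contR g -> a <= b -> (forall u, a <= u <= b -> Rabs (f u) <= g u) ->
  Rabs (RInt f a b) <= RInt g a b.
Proof.
  intros Hf Hg Hab H. eapply Rle_trans. apply abs_RInt_le; auto. apply exR; auto.
  apply RInt_le; auto. apply (@ex_RInt_continuous R_CompleteNormedModule). intros. apply continuous_Rabs_comp. apply Hf.
  apply exR; auto. intros; apply H; lra.
Qed.

Lemma RInt_expl k t0 t : k <> 0 -> RInt (fun s => exp (k * (s - t0))) t0 t = (exp (k * (t - t0)) - 1) / k.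
Proof.
  intros Hk. apply is_RInt_unique.
  replace ((exp (k * (t - t0)) - 1) / k) with (minus (exp (k * (t - t0)) / k) (exp (k * (t0 - t0)) / k)).
  2:{ unfold minus, plus, opp; simpl. replace (t0 - t0) with 0 by ring. rewrite Rmult_0_r, exp_0. field; auto. }
  apply (is_RInt_derive (fun s => exp (k * (s - t0)) / k)).
  - intros x _. eapply deriv_eq. unfold Rdiv. apply (der_mult (fun s => exp (k * (s - t0))) (fun _ => / k)).
    apply der_expl. apply is_derive_const. unfold zero; simpl. field; auto.
  - intros; apply cont_expl.
Qed.

Lemma pow2_ge n : INR n + 1 <= 2 ^ n.
Proof. induction n. simpl; lra. rewrite S_INR. simpl. pose proof (pos_INR n). lra. Qed.

Lemma zero_of_geom a K : (forall n, Rabs a <= K / 2 ^ n) -> a = 0.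
Proof.
  intros H. destruct (Req_dec a 0) as [|Ha]; auto. exfalso.
  assert (Hp : 0 < Rabs a) by (apply Rabs_pos_lt; auto).
  assert (HK : 0 < K). { specialize (H 0%nat). simpl in H. lra. }
  destruct (ex_nat_above (K / Rabs a) 1 Rlt_0_1) as [n Hn]. rewrite Rmult_1_r in Hn.
  specialize (H n). pose proof (pow2_ge n). assert (0 < 2 ^ n) by (apply pow_lt; lra).
  apply (Rmult_le_compat_r (2 ^ n)) in H; [|lra]. unfold Rdiv in H. rewrite Rmult_assoc, Rinv_l, Rmult_1_r in H by lra.
  assert (K / Rabs a * Rabs a = K) by (field; lra).
  assert (Rabs a * (INR n + 1) <= K) by nra. nra.
Qed.

Definition mk (f : (state -> R) -> R) : state := (f c1, f c2, f c3, f c4).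

Lemma mk_c f c : In c comps -> c (mk f) = f c.
Proof. simpl. intros [<-|[<-|[<-|[<-|[]]]]]; reflexivity. Qed.

Lemma ndist_c y z c : In c comps -> Rabs (c y - c z) <= ndist y z.
Proof.
  unfold ndist. simpl. intros [<-|[<-|[<-|[<-|[]]]]].
  - eapply Rle_trans; [apply Rmax_l|apply Rmax_l].
  - eapply Rle_trans; [apply Rmax_r|apply Rmax_l].
  - eapply Rle_trans; [apply Rmax_l|apply Rmax_r].
  - eapply Rle_trans; [apply Rmax_r|apply Rmax_r].
Qed.

Lemma ndist_all y z e : (forall c, In c comps -> Rabs (c y - c z) <= e) -> ndist y z <= e.
Proof. intros H. unfold ndist. repeat apply Rmax_lub; apply H; simpl; auto. Qed.

Lemma state_eq y z : (forall c, In c comps -> c y = c z) -> y = z.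
Proof. destruct y as [[[y1 y2] y3] y4]; destruct z as [[[z1 z2] z3] z4]. intros H.
  pose proof (H c1 ltac:(simpl; auto)). pose proof (H c2 ltac:(simpl; auto)).
  pose proof (H c3 ltac:(simpl; auto)). pose proof (H c4 ltac:(simpl; auto)). simpl in *. subst. reflexivity. Qed.

Lemma simp1 a b : a + b - a = b. Proof. ring. Qed.
Lemma simp2 a b c : a + b - (a + c) = b - c. Proof. ring. Qed.

Section Picard.
Variable Gf : R -> state -> state.
Variables L M : R.
Hypothesis HL : 0 < L.
Hypothesis HM : 0 <= M.
Hypothesis Glip : forall c, In c comps -> forall s y z, Rabs (c (Gf s y) - c (Gf s z)) <= L * ndist y z.
Hypothesis Gbd : forall c, In c comps -> forall s y, Rabs (c (Gf s y)) <= M.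
Hypothesis Gcont : forall X : R -> state, (forall c, In c comps -> contR (fun s => c (X s))) ->
  forall c, In c comps -> contR (fun s => c (Gf s (X s))).
Variable t0 : R.
Variable x0 : state.

Definition Pic (X : R -> state) t := mk (fun c => c x0 + RInt (fun s => c (Gf s (X s))) t0 t).
Fixpoint Xn n := match n with O => fun _ => x0 | S n => Pic (Xn n) end.

Lemma Xn_S c n t : In c comps -> c (Xn (S n) t) = c x0 + RInt (fun s => c (Gf s (Xn n s))) t0 t.
Proof. intros Hc. simpl. unfold Pic. rewrite mk_c; auto. Qed.

Lemma Xn_cont n : forall c, In c comps -> contR (fun t => c (Xn n t)).
Proof.
  induction n; intros c Hc s.
  - apply continuous_const.
  - apply (continuous_ext (fun t => c x0 + RInt (fun s => c (Gf s (Xn n s))) t0 t)).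
    intros; rewrite Xn_S; auto. unfold continuous. apply lim_plus. apply lim_const.
    apply RInt_cont. apply Gcont; auto.
Qed.

Lemma Xn_t0 n c : In c comps -> c (Xn n t0) = c x0.
Proof. intros Hc. destruct n. reflexivity. rewrite Xn_S, RInt_point; auto. unfold zero; simpl; ring. Qed.

Lemma Xn_lip n c : In c comps -> forall s t, Rabs (c (Xn n s) - c (Xn n t)) <= M * Rabs (s - t).
Proof.
  intros Hc s t. destruct n.
  - simpl. unfold Rminus; rewrite Rplus_opp_r, Rabs_R0. apply Rmult_le_pos; auto; apply Rabs_pos.
  - rewrite !Xn_S by auto. rewrite simp2.
    rewrite RInt_diff. apply RInt_absbound. apply Gcont; auto. apply Xn_cont. intros; apply Gbd; auto.
    apply Gcont; auto. apply Xn_cont.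
Qed.

Definition A0 := M / (2 * L).
Definition Cb t := A0 * exp (2 * L * (t - t0)).

Lemma Cb_pos t : 0 <= Cb t.
Proof. unfold Cb, A0. apply Rmult_le_pos. apply Rdiv_le_0_compat; lra. left; apply exp_pos. Qed.

Lemma Cb_mono s t : s <= t -> Cb s <= Cb t.
Proof. intros H. unfold Cb, A0. apply Rmult_le_compat_l. apply Rdiv_le_0_compat; lra. apply exp_mono. nra. Qed.

Lemma Xn_diff n : forall t, t0 <= t -> forall c, In c comps -> Rabs (c (Xn (S n) t) - c (Xn n t)) <= Cb t / 2 ^ n.
Proof.
  induction n; intros t Ht c Hc.
  - rewrite Xn_S by auto. change (Xn 0 t) with x0. rewrite simp1.
    eapply Rle_trans. apply RInt_absbound. apply (Gcont (fun _ => x0)); auto. intros; intro; apply continuous_const.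
    intros; apply Gbd; auto.
    rewrite Rabs_right by lra. unfold Cb, A0. pose proof (exp_ineq1_le (2 * L * (t - t0))).
    change (2 ^ 0) with 1. rewrite Rdiv_1.
    apply Rle_trans with (M / (2 * L) * (1 + 2 * L * (t - t0))).
    + replace (M / (2 * L) * (1 + 2 * L * (t - t0))) with (M / (2 * L) + M * (t - t0)) by (field; lra).
      assert (0 <= M / (2 * L)) by (apply Rdiv_le_0_compat; lra). lra.
    + apply Rmult_le_compat_l; auto. apply Rdiv_le_0_compat; lra.
  - rewrite !Xn_S by auto.
    rewrite simp2.
    rewrite <- RInt_minus' by (apply Gcont; auto; apply Xn_cont).
    eapply Rle_trans. apply (RInt_abs_le _ (fun s => (L / 2 ^ n * A0) * exp (2 * L * (s - t0)))).
    + apply contR_minus; apply Gcont; auto; apply Xn_cont.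
    + intro s. unfold continuous. apply lim_mult. apply lim_const. apply cont_expl.
    + auto.
    + intros u Hu. eapply Rle_trans. apply Glip; auto.
      assert (ndist (Xn (S n) u) (Xn n u) <= Cb u / 2 ^ n) by (apply ndist_all; intros; apply IHn; auto; lra).
      unfold Cb in H. replace (L / 2 ^ n * A0 * exp (2 * L * (u - t0))) with (L * (A0 * exp (2 * L * (u - t0)) / 2 ^ n))
        by (field; apply pow_nonzero; lra). apply Rmult_le_compat_l; lra.
    + assert (E : RInt (fun s => L / 2 ^ n * A0 * exp (2 * L * (s - t0))) t0 t = L / 2 ^ n * A0 * RInt (fun s => exp (2 * L * (s - t0))) t0 t).
      { apply (RInt_scal (V := R_CompleteNormedModule) (fun s => exp (2 * L * (s - t0)))). apply exR. intro; apply cont_expl. }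
      rewrite E, RInt_expl by lra. unfold Cb. simpl.
      assert (0 < 2 ^ n) by (apply pow_lt; lra). pose proof (exp_pos (2 * L * (t - t0))).
      assert (0 <= A0) by (unfold A0; apply Rdiv_le_0_compat; lra).
      replace (L / 2 ^ n * A0 * ((exp (2 * L * (t - t0)) - 1) / (2 * L))) with
        (A0 * exp (2 * L * (t - t0)) / (2 * 2 ^ n) - A0 / (2 * 2 ^ n)) by (field; lra).
      assert (0 <= A0 / (2 * 2 ^ n)) by (apply Rdiv_le_0_compat; lra). lra.
Qed.

Lemma Xn_cauchy n m t c : t0 <= t -> In c comps ->
  Rabs (c (Xn (n + m) t) - c (Xn n t)) <= 2 * Cb t / 2 ^ n - 2 * Cb t / 2 ^ (n + m).
Proof.
  intros Ht Hc. induction m.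
  - rewrite Nat.add_0_r. unfold Rminus. rewrite !Rplus_opp_r, Rabs_R0. lra.
  - replace (n + S m)%nat with (S (n + m)) by lia.
    replace (c (Xn (S (n + m)) t) - c (Xn n t)) with ((c (Xn (S (n + m)) t) - c (Xn (n + m) t)) + (c (Xn (n + m) t) - c (Xn n t))) by ring.
    eapply Rle_trans. apply Rabs_triang.
    pose proof (Xn_diff (n + m) t Ht c Hc).
    assert (0 < 2 ^ (n + m)) by (apply pow_lt; lra).
    replace (2 * Cb t / 2 ^ S (n + m)) with (Cb t / 2 ^ (n + m)) by (simpl; field; lra). lra.
Qed.

Lemma Xn_cauchy' n m t c : t0 <= t -> In c comps -> (n <= m)%nat ->
  Rabs (c (Xn m t) - c (Xn n t)) <= 2 * Cb t / 2 ^ n.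
Proof.
  intros Ht Hc Hnm. replace m with (n + (m - n))%nat by lia.
  eapply Rle_trans. apply Xn_cauchy; auto.
  assert (0 < 2 ^ (n + (m - n))) by (apply pow_lt; lra). pose proof (Cb_pos t).
  assert (0 <= 2 * Cb t / 2 ^ (n + (m - n))) by (apply Rdiv_le_0_compat; lra). lra.
Qed.

Lemma Xn_conv t c : t0 <= t -> In c comps -> ex_finite_lim_seq (fun n => c (Xn n t)).
Proof.
  intros Ht Hc. apply ex_lim_seq_cauchy_corr. intros [eps Heps]. simpl.
  pose proof (Cb_pos t).
  destruct (ex_nat_above (4 * Cb t / eps) 1 Rlt_0_1) as [N HN]. rewrite Rmult_1_r in HN.
  exists N. intros n m Hn Hm.
  replace (c (Xn n t) - c (Xn m t)) with ((c (Xn n t) - c (Xn N t)) - (c (Xn m t) - c (Xn N t))) by ring.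
  eapply Rle_lt_trans. apply Rabs_triang. rewrite Rabs_Ropp.
  pose proof (Xn_cauchy' N n t c Ht Hc Hn). pose proof (Xn_cauchy' N m t c Ht Hc Hm).
  pose proof (pow2_ge N). assert (0 < 2 ^ N) by (apply pow_lt; lra).
  assert (4 * Cb t / 2 ^ N < eps).
  { apply (Rmult_lt_reg_r (2 ^ N)); auto. unfold Rdiv. rewrite Rmult_assoc, Rinv_l, Rmult_1_r by lra.
    assert (4 * Cb t / eps * eps = 4 * Cb t) by (field; lra). nra. }
  assert (2 * Cb t / 2 ^ N + 2 * Cb t / 2 ^ N = 4 * Cb t / 2 ^ N) by (field; lra). lra.
Qed.

Definition Xl t := mk (fun c => real (Lim_seq (fun n => c (Xn n t)))).

Lemma Xl_lim t c : t0 <= t -> In c comps -> is_lim_seq (fun n => c (Xn n t)) (c (Xl t)).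
Proof.
  intros Ht Hc. unfold Xl. rewrite mk_c by auto.
  destruct (Xn_conv t c Ht Hc) as [l Hl]. rewrite (is_lim_seq_unique _ _ Hl). simpl. exact Hl.
Qed.

Lemma lim_abs_le (u : nat -> R) (l a e : R) : is_lim_seq u l -> (forall m, Rabs (u m - a) <= e) -> Rabs (l - a) <= e.
Proof.
  intros Hu H. assert (Hl : is_lim_seq (fun m => Rabs (u m - a)) (Rabs (l - a))).
  { apply (is_lim_seq_abs _ (Finite (l - a))). apply is_lim_seq_minus'; auto. apply is_lim_seq_const. }
  pose proof (is_lim_seq_le _ _ _ _ H Hl (is_lim_seq_const e)). simpl in H0. exact H0.
Qed.

Lemma Xl_bound t c n : t0 <= t -> In c comps -> Rabs (c (Xl t) - c (Xn n t)) <= 2 * Cb t / 2 ^ n.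
Proof.
  intros Ht Hc. pose proof (Xl_lim t c Ht Hc) as Hl.
  apply (is_lim_seq_incr_n _ n) in Hl.
  apply (lim_abs_le _ _ _ _ Hl). intros m. apply Xn_cauchy'; auto. lia.
Qed.

Lemma Xl_lip s t c : t0 <= s -> t0 <= t -> In c comps -> Rabs (c (Xl s) - c (Xl t)) <= M * Rabs (s - t).
Proof.
  intros Hs Ht Hc.
  assert (Hl : is_lim_seq (fun n => c (Xn n s) - c (Xn n t)) (c (Xl s) - c (Xl t))).
  { apply is_lim_seq_minus'; apply Xl_lim; auto. }
  replace (c (Xl s) - c (Xl t)) with ((c (Xl s) - c (Xl t)) - 0) by ring.
  apply (lim_abs_le _ _ _ _ Hl). intros m. rewrite Rminus_0_r. apply Xn_lip; auto.
Qed.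

Definition Xc t := Xl (Rmax t t0).

Lemma Xc_eq t : t0 <= t -> Xc t = Xl t.
Proof. intros H. unfold Xc. rewrite Rmax_left; auto. Qed.

Lemma Xc_cont c : In c comps -> contR (fun t => c (Xc t)).
Proof.
  intros Hc s. apply cont_of_eps. intros eps Heps.
  exists (eps / (M + 1)). split. apply Rdiv_lt_0_compat; lra.
  intros y Hy. unfold Xc. eapply Rle_lt_trans. apply Xl_lip; auto; apply Rmax_r.
  assert (Rabs (Rmax y t0 - Rmax s t0) <= Rabs (y - s)).
  { unfold Rmax. destruct (Rle_dec y t0); destruct (Rle_dec s t0);
    unfold Rabs; repeat match goal with |- context [Rcase_abs ?x] => destruct (Rcase_abs x) end; lra. }
  assert (M * Rabs (Rmax y t0 - Rmax s t0) <= M * (eps / (M + 1))).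
  { apply Rmult_le_compat_l; auto. lra. }
  assert (M * (eps / (M + 1)) < eps).
  { apply (Rmult_lt_reg_r (M + 1)). lra. replace (M * (eps / (M + 1)) * (M + 1)) with (M * eps) by (field; lra). nra. }
  lra.
Qed.

Lemma Xc_t0 : Xc t0 = x0.
Proof.
  apply state_eq. intros c Hc. rewrite Xc_eq by lra.
  pose proof (Xl_lim t0 c (Rle_refl _) Hc) as Hl.
  apply (is_lim_seq_ext _ (fun _ => c x0)) in Hl. 2:{ intros; apply Xn_t0; auto. }
  pose proof (is_lim_seq_unique _ _ Hl). rewrite Lim_seq_const in H. injection H; auto.
Qed.

Lemma Xc_fix t c : t0 <= t -> In c comps -> c (Xc t) = c x0 + RInt (fun s => c (Gf s (Xc s))) t0 t.
Proof.
  intros Ht Hc.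
  assert (HG : contR (fun s => c (Gf s (Xc s)))) by (apply Gcont; auto; apply Xc_cont).
  assert (Z : c (Xc t) - c x0 - RInt (fun s => c (Gf s (Xc s))) t0 t = 0).
  { apply (zero_of_geom _ (2 * Cb t + (t - t0) * (L * (2 * Cb t)))). intros n.
    pose proof (Xn_S c n t Hc) as HS.
    replace (c (Xc t) - c x0 - RInt (fun s => c (Gf s (Xc s))) t0 t) with
      ((c (Xl t) - c (Xn (S n) t)) + (RInt (fun s => c (Gf s (Xn n s))) t0 t - RInt (fun s => c (Gf s (Xc s))) t0 t))
      by (rewrite HS, Xc_eq by auto; ring).
    eapply Rle_trans. apply Rabs_triang.
    pose proof (Xl_bound t c (S n) Ht Hc) as B1.
    assert (B2 : Rabs (RInt (fun s => c (Gf s (Xn n s))) t0 t - RInt (fun s => c (Gf s (Xc s))) t0 t) <= (t - t0) * (L * (2 * Cb t / 2 ^ n))).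
    { rewrite <- RInt_minus' by (auto; apply Gcont; auto; apply Xn_cont).
      eapply Rle_trans. apply (RInt_abs_le _ (fun _ => L * (2 * Cb t / 2 ^ n))).
      - apply contR_minus; auto. apply Gcont; auto; apply Xn_cont.
      - intro; apply continuous_const.
      - auto.
      - intros u Hu. eapply Rle_trans. apply Glip; auto. apply Rmult_le_compat_l; [lra|].
        apply ndist_all. intros c' Hc'. rewrite Xc_eq by lra. rewrite <- Rabs_Ropp.
        replace (- (c' (Xn n u) - c' (Xl u))) with (c' (Xl u) - c' (Xn n u)) by ring.
        eapply Rle_trans. apply Xl_bound; auto. lra.
        assert (0 < 2 ^ n) by (apply pow_lt; lra). pose proof (Cb_mono u t ltac:(lra)).
        unfold Rdiv. apply Rmult_le_compat_r. left; apply Rinv_0_lt_compat; auto. lra.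
      - rewrite RInt_const. unfold scal; simpl. unfold mult; simpl. lra. }
    assert (0 < 2 ^ n) by (apply pow_lt; lra). pose proof (Cb_pos t).
    assert (2 * Cb t / 2 ^ S n <= 2 * Cb t / 2 ^ n).
    { simpl. unfold Rdiv. apply Rmult_le_compat_l. lra. apply Rinv_le_contravar; lra. }
    assert (E : (2 * Cb t + (t - t0) * (L * (2 * Cb t))) / 2 ^ n = 2 * Cb t / 2 ^ n + (t - t0) * (L * (2 * Cb t / 2 ^ n)))
      by (field; lra).
    rewrite E. lra. }
  lra.
Qed.

Lemma Xc_der s c : t0 < s -> In c comps -> is_derive (fun t => c (Xc t)) s (c (Gf s (Xc s))).
Proof.
  intros Hs Hc.
  assert (HG : contR (fun s => c (Gf s (Xc s)))) by (apply Gcont; auto; apply Xc_cont).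
  apply (is_derive_ext_loc (fun t => c x0 + RInt (fun s => c (Gf s (Xc s))) t0 t)).
  - exists (mkposreal (s - t0) ltac:(lra)). intros y Hy. pose proof (proj1 (ball_R _ _ _) Hy) as Hy2. simpl in Hy2.
    symmetry. apply Xc_fix; auto. apply Rabs_lt_between in Hy2. lra.
  - eapply deriv_eq. apply (der_plus (fun _ => c x0) (fun t => RInt (fun s => c (Gf s (Xc s))) t0 t)).
    apply is_derive_const. apply RInt_der; auto. unfold zero; simpl; ring.
Qed.
End Picard.

Lemma picard_exists (Gf : R -> state -> state) L M :
  0 < L -> 0 <= M ->
  (forall c, In c comps -> forall s y z, Rabs (c (Gf s y) - c (Gf s z)) <= L * ndist y z) ->
  (forall c, In c comps -> forall s y, Rabs (c (Gf s y)) <= M) ->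
  (forall X : R -> state, (forall c, In c comps -> contR (fun s => c (X s))) ->
     forall c, In c comps -> contR (fun s => c (Gf s (X s)))) ->
  forall (t0 : R) (x0 : state), exists X : R -> state, X t0 = x0 /\
    (forall c, In c comps -> contR (fun s => c (X s))) /\
    (forall s, t0 < s -> forall c, In c comps -> is_derive (fun t => c (X t)) s (c (Gf s (X s)))).
Proof.
  intros HL HM Hlip Hbd Hcont t0 x0. exists (Xc Gf t0 x0). split; [|split].
  - apply (Xc_t0 Gf L M); auto.
  - intros; apply (Xc_cont Gf L M); auto.
  - intros; apply (Xc_der Gf L M); auto.
Qed.


Section Main.
Variables a1 a2 b2 b3 b4 d1 d2 d4 rho iM : R.
Variables i w : R -> R.
Hypothesis Ha1 : 0 < a1.
Hypothesis Ha2 : 0 < a2.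
Hypothesis Hb2 : 0 < b2.
Hypothesis Hb3 : 0 < b3.
Hypothesis Hb4 : 0 < b4.
Hypothesis Hd1 : 0 < d1.
Hypothesis Hd2 : 0 < d2.
Hypothesis Hd4 : 0 < d4.
Hypothesis Hrho : 0 < rho.
Hypothesis Hic : forall t, 0 <= t ->
       filterlim i (within (fun s => 0 <= s) (locally t)) (locally (i t)).
Hypothesis Hib : forall t, 0 <= t -> 0 <= i t <= iM.
Hypothesis Hip : forall t, 0 <= t -> i (t + rho) = i t.
Hypothesis Hmean : RInt i 0 rho / rho = 1.
Hypothesis Hw : forall t, 0 < t -> is_derive w t (b4 * (i t - w t)).
Hypothesis Hwp : forall t, 0 <= t -> w (t + rho) = w t.

Definition it (s : R) := i (Rmax s 0).

Lemma it_eq s : 0 <= s -> it s = i s.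
Proof. intros. unfold it. rewrite Rmax_left; auto. Qed.

Lemma it_cont s : continuous it s.
Proof.
  apply cont_of_eps. intros eps Heps. set (m := Rmax s 0).
  assert (Hm : 0 <= m) by apply Rmax_r.
  destruct (proj1 (filterlim_locally _ _) (Hic m Hm) (mkposreal eps Heps)) as [d Hd].
  exists d; split; [apply cond_pos|]. intros y Hy.
  assert (H1 : Rabs (Rmax y 0 - m) < d) by (eapply Rle_lt_trans; [apply Rmax0_lip|exact Hy]).
  specialize (Hd (Rmax y 0) (proj2 (ball_R _ _ _) H1) (Rmax_r _ _)).
  apply ball_R in Hd. exact Hd.
Qed.

Lemma it_bound s : 0 <= it s <= iM.
Proof. unfold it. apply Hib, Rmax_r. Qed.

Lemma ex_RInt_it a b : ex_RInt it a b.
Proof. apply (@ex_RInt_continuous R_CompleteNormedModule). intros; apply it_cont. Qed.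

Definition Q (t : R) := RInt it 0 t - t.

Lemma Q_der t : is_derive Q t (it t - 1).
Proof.
  unfold Q. apply (der_minus (fun t => RInt it 0 t) (fun t => t)).
  - apply (is_derive_RInt it (fun t => RInt it 0 t) 0 t).
    + exists (mkposreal 1 Rlt_0_1). intros; apply (@RInt_correct R_CompleteNormedModule), ex_RInt_it.
    + apply it_cont.
  - apply (is_derive_id t).
Qed.

Lemma Q_cont t : continuous Q t.
Proof. apply (@ex_derive_continuous R_AbsRing R_NormedModule). eexists; apply Q_der. Qed.

Lemma RInt_it_rho : RInt it 0 rho = rho.
Proof.
  transitivity (RInt i 0 rho).
  - apply RInt_ext. intros x Hx. rewrite Rmin_left, Rmax_right in Hx by lra. apply it_eq; lra.
  - apply (Rmult_eq_reg_r (/ rho)); [|apply Rinv_neq_0_compat; lra]. rewrite Rinv_r by lra. exact Hmean.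
Qed.

Lemma Q_per t : 0 <= t -> Q (t + rho) = Q t.
Proof.
  intros Ht.
  pose (D := fun s => Q (s + rho) - Q s).
  assert (HD0 : D 0 = 0).
  { unfold D, Q. rewrite Rplus_0_l, RInt_it_rho, RInt_point. unfold zero; simpl. ring. }
  assert (Hder : forall s, 0 < s <= t -> is_derive D s 0).
  { intros s Hs. unfold D. eapply deriv_eq.
    apply (der_minus (fun s => Q (s + rho)) Q).
    - eapply deriv_eq. apply (is_derive_comp Q (fun s => s + rho)). apply Q_der.
      apply (is_derive_plus (fun s => s) (fun _ => rho)). apply is_derive_id. apply is_derive_const.
      reflexivity.
    - apply Q_der.
    - unfold plus, one, zero, scal; simpl. unfold mult; simpl.
      rewrite !it_eq by lra. rewrite Hip by lra. ring. }
  assert (HrcD : rc D 0).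
  { unfold rc, D. apply lim_minus.
    apply (lim_comp (fun s => s + rho) Q). apply lim_plus. apply rc_id. apply lim_const. apply Q_cont.
    apply cont_rc, Q_cont. }
  assert (A1 : D t <= D 0). { apply (dec_lemma D (fun _ => 0) 0 t Ht); auto. intros; lra. }
  assert (A2 : - D t <= - D 0).
  { apply (dec_lemma (fun s => - D s) (fun _ => - 0) 0 t Ht); auto.
    intros s Hs. apply (is_derive_opp D). auto. intros; lra. unfold rc. apply lim_opp. exact HrcD. }
  assert (HDt : D t = 0) by lra. unfold D in HDt. lra.
Qed.

Definition Qm := (Rabs iM + 1) * rho.

Lemma Q_bound t : 0 <= t -> Rabs (Q t) <= Qm.
Proof.
  assert (Hbase : forall t, 0 <= t <= rho -> Rabs (Q t) <= Qm).
  { intros s Hs. unfold Q, Qm.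
    assert (H1 : Rabs (RInt it 0 s) <= (s - 0) * Rabs iM).
    { apply abs_RInt_le_const. lra. apply ex_RInt_it. intros u Hu. pose proof (it_bound u).
      rewrite !Rabs_right by lra. lra. }
    pose proof (Rabs_pos iM).
    eapply Rle_trans. apply Rabs_triang. rewrite Rabs_Ropp, (Rabs_right s) by lra. nra. }
  assert (Hind : forall n : nat, forall t, 0 <= t <= INR n * rho -> Rabs (Q t) <= Qm).
  { induction n as [|n IH]; intros s Hs.
    - apply Hbase. simpl in Hs. lra.
    - rewrite S_INR in Hs. destruct (Rle_dec s rho). apply Hbase; lra.
      replace s with ((s - rho) + rho) by ring. rewrite Q_per by lra. apply IH. lra. }
  intros Ht. destruct (ex_nat_above t rho Hrho) as [n Hn]. apply (Hind n). lra.
Qed.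

Lemma w_cont s : 0 < s -> continuous w s.
Proof. intros Hs. apply (@ex_derive_continuous R_AbsRing R_NormedModule). eexists; apply Hw; auto. Qed.

Lemma w_rc0 : rc w 0.
Proof.
  apply rc_of_eps. intros eps Heps. destruct (cont_eps w rho (w_cont rho Hrho) eps Heps) as [d [Hd Hdd]].
  exists d; split; auto. intros y Hy.
  rewrite <- (Hwp y) by lra. rewrite <- (Hwp 0) by lra. rewrite Rplus_0_l. apply Hdd.
  rewrite Rabs_right; lra.
Qed.

Definition Wb := Rabs (w rho) + 2 * Rabs iM.

Lemma exp_le1 x : x <= 0 -> exp x <= 1.
Proof. intros H. destruct H as [H| H]. left. rewrite <- exp_0. apply exp_increasing; auto. rewrite H, exp_0; lra. Qed.

Lemma w_bound t : 0 <= t -> Rabs (w t) <= Wb.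
Proof.
  assert (Hbig : forall t, rho <= t -> Rabs (w t) <= Wb).
  { clear t. intros t Ht.
    assert (E0 : 0 < exp (- b4 * (t - rho)) <= 1). { split. apply exp_pos. apply exp_le1. nra. }
    assert (A1 : w t - iM <= (w rho - iM) * exp (- b4 * (t - rho))).
    { apply (GL0 (fun s => w s - iM) (fun s => b4 * (i s - w s)) b4 rho t Ht).
      - intros s Hs. eapply deriv_eq. apply (der_minus w (fun _ => iM)). apply Hw; lra. apply is_derive_const.
        unfold zero; simpl; ring.
      - intros s Hs. pose proof (Hib s ltac:(lra)). nra.
      - unfold rc. apply lim_minus. apply cont_rc, w_cont; lra. apply lim_const. }
    assert (A2 : - w t <= - w rho * exp (- b4 * (t - rho))).
    { apply (GL0 (fun s => - w s) (fun s => - (b4 * (i s - w s))) b4 rho t Ht).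
      - intros s Hs. apply (is_derive_opp w). apply Hw; lra.
      - intros s Hs. pose proof (Hib s ltac:(lra)). nra.
      - unfold rc. apply lim_opp. apply cont_rc, w_cont; lra. }
    unfold Wb. pose proof (Rabs_pos iM). pose proof (Rabs_pos (w rho)).
    pose proof (Rle_abs iM). pose proof (Rle_abs (w rho)). pose proof (Rle_abs (- w rho)). rewrite Rabs_Ropp in *.
    pose proof (Rle_abs (- iM)). rewrite Rabs_Ropp in *.
    apply Rabs_le. split; nra. }
  intros Ht. destruct (Rle_dec rho t). apply Hbig; auto. rewrite <- Hwp by auto. apply Hbig; lra.
Qed.

Definition F := sysF a1 a2 b2 b3 b4 d1 d2 d4 i.
Definition p := fun t : R => (1, 0, 0, w t).

Lemma p_sol : is_sol F 0 p_infty p.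
Proof.
  unfold is_sol. intros c Hc. simpl in Hc. destruct Hc as [H|[H|[H|[H|H]]]]; try contradiction; subst c; split; simpl.
  - intros t Ht _. eapply deriv_eq. apply is_derive_const. simpl. unfold zero; simpl; ring.
  - apply cont_rc, continuous_const.
  - intros t Ht _. eapply deriv_eq. apply is_derive_const. simpl. unfold zero; simpl; ring.
  - apply cont_rc, continuous_const.
  - intros t Ht _. eapply deriv_eq. apply is_derive_const. simpl. unfold zero; simpl; ring.
  - apply cont_rc, continuous_const.
  - intros t Ht _. eapply deriv_eq. apply Hw; auto. ring.
  - apply w_rc0.
Qed.

Lemma p_per t : 0 <= t -> p (t + rho) = p t.
Proof. intros Ht. unfold p. rewrite Hwp; auto. Qed.

Lemma w_rc t0 : 0 <= t0 -> rc w t0.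
Proof. intros [H|<-]. apply cont_rc, w_cont; auto. apply w_rc0. Qed.

Lemma c1F s y : c1 (F s y) = c1 y * (1 - c1 y - a1 * c2 y - d1 * c3 y).
Proof. destruct y as [[[? ?] ?] ?]; reflexivity. Qed.
Lemma c2F s y : c2 (F s y) = b2 * c2 y * (1 - c2 y - a2 * c1 y - d2 * c4 y).
Proof. destruct y as [[[? ?] ?] ?]; reflexivity. Qed.
Lemma c3F s y : c3 (F s y) = b3 * (c2 y - c3 y).
Proof. destruct y as [[[? ?] ?] ?]; reflexivity. Qed.
Lemma c4F s y : c4 (F s y) = b4 * (i s - c4 y - d4 * c4 y * c2 y).
Proof. destruct y as [[[? ?] ?] ?]; reflexivity. Qed.

Lemma ndist_p y s : ndist y (p s) =
  Rmax (Rmax (Rabs (c1 y - 1)) (Rabs (c2 y))) (Rmax (Rabs (c3 y)) (Rabs (c4 y - w s))).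
Proof. destruct y as [[[? ?] ?] ?]. unfold ndist, p; simpl. rewrite !Rminus_0_r. reflexivity. Qed.

Lemma ndist_le y s r : ndist y (p s) <= r ->
  Rabs (c1 y - 1) <= r /\ Rabs (c2 y) <= r /\ Rabs (c3 y) <= r /\ Rabs (c4 y - w s) <= r.
Proof. rewrite ndist_p. intros H.
  pose proof (Rmax_l (Rmax (Rabs (c1 y - 1)) (Rabs (c2 y))) (Rmax (Rabs (c3 y)) (Rabs (c4 y - w s)))).
  pose proof (Rmax_r (Rmax (Rabs (c1 y - 1)) (Rabs (c2 y))) (Rmax (Rabs (c3 y)) (Rabs (c4 y - w s)))).
  pose proof (Rmax_l (Rabs (c1 y - 1)) (Rabs (c2 y))). pose proof (Rmax_r (Rabs (c1 y - 1)) (Rabs (c2 y))).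
  pose proof (Rmax_l (Rabs (c3 y)) (Rabs (c4 y - w s))). pose proof (Rmax_r (Rabs (c3 y)) (Rabs (c4 y - w s))).
  repeat split; lra. Qed.

Lemma ndist_lt y s r : Rabs (c1 y - 1) < r -> Rabs (c2 y) < r -> Rabs (c3 y) < r -> Rabs (c4 y - w s) < r ->
  ndist y (p s) < r.
Proof. intros. rewrite ndist_p. apply Rmax_lub_lt; apply Rmax_lub_lt; auto. Qed.

Lemma ndist_le2 y s r : Rabs (c1 y - 1) <= r -> Rabs (c2 y) <= r -> Rabs (c3 y) <= r -> Rabs (c4 y - w s) <= r ->
  ndist y (p s) <= r.
Proof. intros. rewrite ndist_p. apply Rmax_lub; apply Rmax_lub; auto. Qed.

Definition solT (x : R -> state) t0 T :=
  (forall s, t0 < s <= T -> forall c, In c comps -> is_derive (fun s => c (x s)) s (c (F s (x s)))) /\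
  (forall c, In c comps -> rc (fun s => c (x s)) t0).

Lemma In1 : In c1 comps. Proof. simpl; auto. Qed.
Lemma In2 : In c2 comps. Proof. simpl; auto. Qed.
Lemma In3 : In c3 comps. Proof. simpl; auto. Qed.
Lemma In4 : In c4 comps. Proof. simpl; auto. Qed.

Definition gam := a2 + d2 - 1.
Definition W1 := Wb + 1.
Definition r0 := Rmin (1/2) (Rabs gam / (2 * (1 + a2 + d2 * d4 * W1))).
Definition Phi := (b2 * d2 / b4) * (2 * W1) + b2 * d2 * (2 * Qm).

Definition phi (x : R -> state) s := - (b2 * d2 / b4) * c4 (x s) + b2 * d2 * Q s.
Definition Zf (x : R -> state) s := c2 (x s) * c2 (x s) * exp (2 * phi x s).

Lemma W1_pos : 1 <= W1.
Proof. unfold W1, Wb. pose proof (Rabs_pos (w rho)). pose proof (Rabs_pos iM). lra. Qed.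

Lemma r0_pos : gam <> 0 -> 0 < r0.
Proof. intros H. unfold r0. apply Rmin_case. lra. pose proof W1_pos.
  apply Rdiv_lt_0_compat. apply Rabs_pos_lt; auto. assert (0 < d2 * d4) by (apply Rmult_lt_0_compat; auto). nra. Qed.

Lemma r0_le : r0 <= 1/2.
Proof. apply Rmin_l. Qed.

Lemma Zf_der x t0 T s : 0 <= t0 -> solT x t0 T -> t0 < s <= T ->
  is_derive (Zf x) s (2 * b2 * Zf x s *
     (- gam - c2 (x s) - a2 * (c1 (x s) - 1) + d2 * d4 * c4 (x s) * c2 (x s))).
Proof.
  intros Ht0 [Hd _] Hs.
  pose proof (Hd s Hs c2 In2) as D2. pose proof (Hd s Hs c4 In4) as D4.
  rewrite c2F in D2. rewrite c4F in D4.
  unfold Zf. eapply deriv_eq.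
  apply (der_mult (fun s => c2 (x s) * c2 (x s)) (fun s => exp (2 * phi x s))).
  apply der_sq; exact D2.
  apply der_exp_comp. apply der_scal. unfold phi.
  apply (der_plus (fun s => - (b2 * d2 / b4) * c4 (x s)) (fun s => b2 * d2 * Q s)).
  apply der_scal; exact D4. apply der_scal; apply Q_der.
  rewrite it_eq by lra. unfold gam. field. lra.
Qed.

Lemma u4_bound y s r : 0 <= s -> r <= 1/2 -> ndist y (p s) <= r -> Rabs (c4 y) <= W1.
Proof. intros Hs Hr H. destruct (ndist_le y s r H) as [_ [_ [_ H4]]]. pose proof (w_bound s Hs).
  unfold W1. replace (c4 y) with ((c4 y - w s) + w s) by ring. eapply Rle_trans. apply Rabs_triang. lra. Qed.

Lemma err_bound y s r : 0 <= s -> r <= r0 -> ndist y (p s) <= r ->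
  Rabs (- c2 y - a2 * (c1 y - 1) + d2 * d4 * c4 y * c2 y) <= Rabs gam / 2.
Proof.
  intros Hs Hr H. pose proof r0_le.
  destruct (ndist_le y s r H) as [H1 [H2 [_ _]]].
  pose proof (u4_bound y s r Hs ltac:(lra) H) as H4.
  assert (Hdd : 0 < d2 * d4) by (apply Rmult_lt_0_compat; auto).
  assert (Hr0 : r0 * (2 * (1 + a2 + d2 * d4 * W1)) <= Rabs gam).
  { unfold r0. pose proof W1_pos. assert (0 < 2 * (1 + a2 + d2 * d4 * W1)) by nra.
    apply (Rmult_le_reg_r (/ (2 * (1 + a2 + d2 * d4 * W1)))). apply Rinv_0_lt_compat; auto.
    rewrite Rmult_assoc, Rinv_r by lra. rewrite Rmult_1_r. apply Rmin_r. }
  eapply Rle_trans. apply Rabs_triang.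
  assert (E1 : Rabs (- c2 y - a2 * (c1 y - 1)) <= r + a2 * r).
  { unfold Rminus at 1. eapply Rle_trans. apply Rabs_triang. rewrite !Rabs_Ropp, Rabs_mult, (Rabs_right a2) by lra. nra. }
  assert (E2 : Rabs (d2 * d4 * c4 y * c2 y) <= d2 * d4 * W1 * r).
  { rewrite !Rabs_mult, (Rabs_right d2), (Rabs_right d4) by lra. pose proof (Rabs_pos (c4 y)). pose proof (Rabs_pos (c2 y)).
    apply Rmult_le_compat. nra. auto. apply Rmult_le_compat_l. nra. auto. auto. }
  assert (0 <= r) by (eapply Rle_trans; [apply Rabs_pos|exact H2]).
  pose proof W1_pos. assert (HD : 0 <= 2 * (1 + a2 + d2 * d4 * W1)) by nra.
  assert (r * (2 * (1 + a2 + d2 * d4 * W1)) <= r0 * (2 * (1 + a2 + d2 * d4 * W1))) by (apply Rmult_le_compat_r; lra).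
  lra.
Qed.

Lemma phi_diff x s t : 0 <= s -> 0 <= t -> ndist (x s) (p s) <= 1/2 -> ndist (x t) (p t) <= 1/2 ->
  Rabs (phi x s - phi x t) <= Phi.
Proof.
  intros Hs Ht H1 H2. pose proof (u4_bound (x s) s (1/2) Hs ltac:(lra) H1). pose proof (u4_bound (x t) t (1/2) Ht ltac:(lra) H2).
  pose proof (Q_bound s Hs). pose proof (Q_bound t Ht).
  unfold phi, Phi.
  replace (- (b2 * d2 / b4) * c4 (x s) + b2 * d2 * Q s - (- (b2 * d2 / b4) * c4 (x t) + b2 * d2 * Q t))
    with ((b2 * d2 / b4) * (c4 (x t) - c4 (x s)) + b2 * d2 * (Q s - Q t)) by ring.
  assert (0 < b2 * d2 / b4) by (apply Rdiv_lt_0_compat; [apply Rmult_lt_0_compat|]; auto).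
  assert (0 < b2 * d2) by (apply Rmult_lt_0_compat; auto).
  eapply Rle_trans. apply Rabs_triang. rewrite (Rabs_mult (b2 * d2 / b4)), (Rabs_mult (b2 * d2)), (Rabs_right (b2 * d2 / b4)), (Rabs_right (b2 * d2)) by lra.
  apply Rplus_le_compat; apply Rmult_le_compat_l; try lra.
  - unfold Rminus. eapply Rle_trans. apply Rabs_triang. rewrite Rabs_Ropp. lra.
  - unfold Rminus. eapply Rle_trans. apply Rabs_triang. rewrite Rabs_Ropp. lra.
Qed.

Lemma Zf_rc x t0 : solT x t0 t0 -> rc (Zf x) t0.
Proof.
  intros [_ Hr]. unfold rc, Zf. apply lim_mult. apply lim_mult; apply Hr, In2.
  apply (lim_comp (fun s => 2 * phi x s) exp). apply lim_mult. apply lim_const.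
  unfold phi. apply lim_plus; apply lim_mult; try apply lim_const. apply Hr, In4. apply cont_rc, Q_cont.
  apply continuous_exp.
Qed.

Lemma solT_mono x t0 T T' : T' <= T -> solT x t0 T -> solT x t0 T'.
Proof. intros H [A B]. split; auto. intros s Hs. apply A. lra. Qed.

Definition beta := Rmin (Rmin (b2 * gam / 2) (b3 / 2)) (Rmin (1/4) (b4 / 2)).
Definition K2 := exp (2 * Phi).
Definition K3 := 1 + b3 * K2 / (b3 - beta).
Definition K1 := 1 + (9 * (a1 * a1) * K2 + 9 * (d1 * d1) * K3) / (1/2 - beta).
Definition K4 := 1 + b4 * (d4 * d4) * (W1 * W1) * K2 / (b4 - beta).
Definition Sc := Rmax (Rmax K1 K2) (Rmax K3 K4).

Lemma beta_facts : 0 < gam -> 0 < beta /\ beta < b2 * gam /\ beta < b3 /\ beta < 1/2 /\ beta < b4.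
Proof.
  intros Hg. assert (0 < b2 * gam) by (apply Rmult_lt_0_compat; auto).
  unfold beta.
  pose proof (Rmin_l (Rmin (b2 * gam / 2) (b3 / 2)) (Rmin (1/4) (b4 / 2))).
  pose proof (Rmin_r (Rmin (b2 * gam / 2) (b3 / 2)) (Rmin (1/4) (b4 / 2))).
  pose proof (Rmin_l (b2 * gam / 2) (b3 / 2)). pose proof (Rmin_r (b2 * gam / 2) (b3 / 2)).
  pose proof (Rmin_l (1/4) (b4 / 2)). pose proof (Rmin_r (1/4) (b4 / 2)).
  repeat split; try lra.
  repeat apply Rmin_glb_lt; lra.
Qed.

Lemma K_facts : 0 < gam -> 1 <= K2 /\ 1 <= K3 /\ 1 <= K1 /\ 1 <= K4.
Proof.
  intros Hg. destruct (beta_facts Hg) as [B0 [B1 [B2 [B3 B4]]]].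
  assert (HK2 : 1 <= K2).
  { unfold K2. rewrite <- exp_0. apply exp_mono. unfold Phi. pose proof W1_pos.
    assert (0 <= Qm) by (unfold Qm; pose proof (Rabs_pos iM); nra).
    assert (0 < b2 * d2 / b4) by (apply Rdiv_lt_0_compat; [apply Rmult_lt_0_compat|]; auto).
    assert (0 < b2 * d2) by (apply Rmult_lt_0_compat; auto). nra. }
  assert (HK3 : 1 <= K3).
  { unfold K3. assert (0 <= b3 * K2 / (b3 - beta)) by (apply Rdiv_le_0_compat; nra). lra. }
  split; auto. split; auto. split.
  - unfold K1. assert (0 <= (9 * (a1 * a1) * K2 + 9 * (d1 * d1) * K3) / (1/2 - beta)).
    { apply Rdiv_le_0_compat; [|lra]. pose proof (Rle_0_sqr a1). pose proof (Rle_0_sqr d1). unfold Rsqr in *. nra. }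
    lra.
  - unfold K4. assert (0 <= b4 * (d4 * d4) * (W1 * W1) * K2 / (b4 - beta)).
    { apply Rdiv_le_0_compat; [|lra]. pose proof W1_pos. assert (0 < d4 * d4) by nra. assert (0 < b4 * (d4 * d4)) by nra.
      assert (0 < W1 * W1) by nra. assert (0 < b4 * (d4 * d4) * (W1 * W1)) by (apply Rmult_lt_0_compat; lra). apply Rmult_le_pos; lra. }
    lra.
Qed.

Lemma Sc_ge : K1 <= Sc /\ K2 <= Sc /\ K3 <= Sc /\ K4 <= Sc.
Proof. unfold Sc. pose proof (Rmax_l (Rmax K1 K2) (Rmax K3 K4)). pose proof (Rmax_r (Rmax K1 K2) (Rmax K3 K4)).
  pose proof (Rmax_l K1 K2). pose proof (Rmax_r K1 K2). pose proof (Rmax_l K3 K4). pose proof (Rmax_r K3 K4).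
  repeat split; lra. Qed.

Lemma sq_nonneg a : 0 <= a * a.
Proof. nra. Qed.

Lemma est x t0 T : 0 < gam -> 0 <= t0 -> t0 <= T -> solT x t0 T ->
  (forall s, t0 <= s <= T -> ndist (x s) (p s) <= r0) ->
  forall t, t0 <= t <= T ->
  (c1 (x t) - 1) * (c1 (x t) - 1) <= Sc * (ndist (x t0) (p t0) * ndist (x t0) (p t0)) * exp (- beta * (t - t0)) /\
  c2 (x t) * c2 (x t) <= Sc * (ndist (x t0) (p t0) * ndist (x t0) (p t0)) * exp (- beta * (t - t0)) /\
  c3 (x t) * c3 (x t) <= Sc * (ndist (x t0) (p t0) * ndist (x t0) (p t0)) * exp (- beta * (t - t0)) /\
  (c4 (x t) - w t) * (c4 (x t) - w t) <= Sc * (ndist (x t0) (p t0) * ndist (x t0) (p t0)) * exp (- beta * (t - t0)).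
Proof.
  intros Hg Ht0 HT Hsol Hreg.
  destruct (beta_facts Hg) as [B0 [B1 [B2 [B3 B4]]]].
  destruct (K_facts Hg) as [HK2 [HK3 [HK1 HK4]]].
  destruct Sc_ge as [S1 [S2 [S3 S4]]].
  pose proof r0_le as Hr0.
  set (dl := ndist (x t0) (p t0)).
  assert (Hdl : 0 <= dl) by (unfold dl, ndist; eapply Rle_trans; [apply Rabs_pos|eapply Rle_trans; [apply Rmax_l|apply Rmax_l]]).
  destruct (ndist_le (x t0) t0 dl (Rle_refl _)) as [I1 [I2 [I3 I4]]].
  apply abs_sq_le in I1, I2, I3, I4.
  destruct Hsol as [Hder Hrcs].
  assert (D1 : forall s, t0 < s <= T -> is_derive (fun s => c1 (x s)) s (c1 (x s) * (1 - c1 (x s) - a1 * c2 (x s) - d1 * c3 (x s)))).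
  { intros s Hs. rewrite <- c1F with (s := s). apply Hder; auto. apply In1. }
  assert (D2 : forall s, t0 < s <= T -> is_derive (fun s => c2 (x s)) s (b2 * c2 (x s) * (1 - c2 (x s) - a2 * c1 (x s) - d2 * c4 (x s)))).
  { intros s Hs. rewrite <- c2F with (s := s). apply Hder; auto. apply In2. }
  assert (D3 : forall s, t0 < s <= T -> is_derive (fun s => c3 (x s)) s (b3 * (c2 (x s) - c3 (x s)))).
  { intros s Hs. rewrite <- c3F with (s := s). apply Hder; auto. apply In3. }
  assert (D4 : forall s, t0 < s <= T -> is_derive (fun s => c4 (x s)) s (b4 * (i s - c4 (x s) - d4 * c4 (x s) * c2 (x s)))).
  { intros s Hs. rewrite <- c4F with (s := s). apply Hder; auto. apply In4. }
  assert (R1 := Hrcs c1 In1). assert (R2 := Hrcs c2 In2). assert (R3 := Hrcs c3 In3). assert (R4 := Hrcs c4 In4).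
  assert (H2 : forall t, t0 <= t <= T -> c2 (x t) * c2 (x t) <= K2 * (dl * dl) * exp (- beta * (t - t0))).
  { intros t Ht.
    assert (HZ : Zf x t <= Zf x t0 * exp (- (b2 * gam) * (t - t0))).
    { apply (GL0 (Zf x) (fun s => 2 * b2 * Zf x s *
          (- gam - c2 (x s) - a2 * (c1 (x s) - 1) + d2 * d4 * c4 (x s) * c2 (x s))) (b2 * gam) t0 t).
      - lra.
      - intros s Hs. apply (Zf_der x t0 T s); auto. split; auto. lra.
      - intros s Hs. assert (Hs0 : 0 <= s) by lra.
        pose proof (err_bound (x s) s r0 Hs0 (Rle_refl _) (Hreg s ltac:(lra))) as He.
        rewrite (Rabs_right gam) in He by lra. apply Rabs_le_between in He.
        assert (HZ0 : 0 <= Zf x s) by (unfold Zf; pose proof (exp_pos (2 * phi x s)); pose proof (sq_nonneg (c2 (x s))); nra).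
        assert (Hq : - gam - c2 (x s) - a2 * (c1 (x s) - 1) + d2 * d4 * c4 (x s) * c2 (x s) <= - gam / 2) by lra.
        assert (HZ1 : 0 <= 2 * b2 * Zf x s) by nra.
        apply Rle_trans with (2 * b2 * Zf x s * (- gam / 2)); [apply Rmult_le_compat_l; auto| cbv beta; nra].
      - apply Zf_rc. split; auto. intros s Hs; lra. }
    assert (HG : exp (- (b2 * gam) * (t - t0)) <= exp (- beta * (t - t0))) by (apply exp_mono; nra).
    pose proof (phi_diff x t0 t Ht0 ltac:(lra) ltac:(pose proof (Hreg t0 ltac:(lra)); lra) ltac:(pose proof (Hreg t ltac:(lra)); lra)) as Hphi.
    apply Rabs_le_between in Hphi.
    assert (HK : exp (2 * phi x t0 + - (2 * phi x t)) <= K2) by (unfold K2; apply exp_mono; lra).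
    unfold Zf in HZ.
    assert (Hsp : c2 (x t) * c2 (x t) = c2 (x t) * c2 (x t) * exp (2 * phi x t) * exp (- (2 * phi x t))).
    { rewrite Rmult_assoc, <- exp_plus. replace (2 * phi x t + - (2 * phi x t)) with 0 by ring. rewrite exp_0; ring. }
    rewrite Hsp.
    pose proof (exp_pos (- (2 * phi x t))). pose proof (exp_pos (2 * phi x t0 + - (2 * phi x t))).
    pose proof (exp_pos (- (b2 * gam) * (t - t0))). pose proof (exp_pos (- beta * (t - t0))).
    eapply Rle_trans. apply Rmult_le_compat_r. lra. exact HZ.
    replace (c2 (x t0) * c2 (x t0) * exp (2 * phi x t0) * exp (- (b2 * gam) * (t - t0)) * exp (- (2 * phi x t)))
      with (c2 (x t0) * c2 (x t0) * exp (2 * phi x t0 + - (2 * phi x t)) * exp (- (b2 * gam) * (t - t0)))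
      by (rewrite exp_plus; ring).
    pose proof (sq_nonneg (c2 (x t0))).
    apply Rmult_le_compat; try nra. }
  assert (H3 : forall t, t0 <= t <= T -> c3 (x t) * c3 (x t) <= K3 * (dl * dl) * exp (- beta * (t - t0))).
  { intros t Ht.
    assert (HV : c3 (x t) * c3 (x t) <= (c3 (x t0) * c3 (x t0) + b3 * K2 * (dl * dl) / (b3 - beta)) * exp (- beta * (t - t0))).
    { apply (GL (fun s => c3 (x s) * c3 (x s)) (fun s => 2 * c3 (x s) * (b3 * (c2 (x s) - c3 (x s)))) b3 (b3 * K2 * (dl * dl)) beta t0 t).
      - lra.
      - repeat apply Rmult_le_pos; try apply sq_nonneg; lra.
      - lra.
      - apply sq_nonneg.
      - intros s Hs. apply (der_sq (fun s => c3 (x s))). apply D3. lra.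
      - intros s Hs. pose proof (L_e3 (c3 (x s)) (c2 (x s)) b3 Hb3). pose proof (H2 s ltac:(lra)). nra.
      - unfold rc. apply lim_mult; auto. }
    pose proof (exp_pos (- beta * (t - t0))).
    replace (b3 * K2 * (dl * dl) / (b3 - beta)) with ((b3 * K2 / (b3 - beta)) * (dl * dl)) in HV by (field; lra).
    unfold K3. nra. }
  assert (H1 : forall t, t0 <= t <= T -> (c1 (x t) - 1) * (c1 (x t) - 1) <= K1 * (dl * dl) * exp (- beta * (t - t0))).
  { intros t Ht.
    set (cc := (9 * (a1 * a1) * K2 + 9 * (d1 * d1) * K3)).
    assert (Hcc : 0 <= cc) by (unfold cc; pose proof (sq_nonneg a1); pose proof (sq_nonneg d1); nra).
    assert (HV : (c1 (x t) - 1) * (c1 (x t) - 1) <= ((c1 (x t0) - 1) * (c1 (x t0) - 1) + cc * (dl * dl) / (1/2 - beta)) * exp (- beta * (t - t0))).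
    { apply (GL (fun s => (c1 (x s) - 1) * (c1 (x s) - 1))
             (fun s => 2 * (c1 (x s) - 1) * (c1 (x s) * (1 - c1 (x s) - a1 * c2 (x s) - d1 * c3 (x s)))) (1/2) (cc * (dl * dl)) beta t0 t).
      - lra.
      - repeat apply Rmult_le_pos; try apply sq_nonneg; lra.
      - lra.
      - apply sq_nonneg.
      - intros s Hs. apply (der_sq (fun s => c1 (x s) - 1)). eapply deriv_eq.
        apply (der_minus (fun s => c1 (x s)) (fun _ => 1)). apply D1; lra. apply is_derive_const.
        unfold zero; simpl; ring.
      - intros s Hs. destruct (ndist_le (x s) s r0 (Hreg s ltac:(lra))) as [J1 _].
        pose proof (L_e1 (c1 (x s) - 1) (c2 (x s)) (c3 (x s)) a1 d1 ltac:(lra)) as L.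
        replace (2 * (c1 (x s) - 1) * (c1 (x s) * (1 - c1 (x s) - a1 * c2 (x s) - d1 * c3 (x s)))) with
          (2 * (c1 (x s) - 1) * (1 + (c1 (x s) - 1)) * (- (c1 (x s) - 1) - a1 * c2 (x s) - d1 * c3 (x s))) by ring.
        eapply Rle_trans. exact L.
        pose proof (H2 s ltac:(lra)). pose proof (H3 s ltac:(lra)).
        pose proof (sq_nonneg a1). pose proof (sq_nonneg d1).
        assert (9 * (a1 * a1) * (c2 (x s) * c2 (x s)) <= 9 * (a1 * a1) * (K2 * (dl * dl) * exp (- beta * (s - t0)))) by (apply Rmult_le_compat_l; nra).
        assert (9 * (d1 * d1) * (c3 (x s) * c3 (x s)) <= 9 * (d1 * d1) * (K3 * (dl * dl) * exp (- beta * (s - t0)))) by (apply Rmult_le_compat_l; nra).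
        unfold cc. nra.
      - unfold rc. apply lim_mult; apply lim_minus; auto; apply lim_const. }
    pose proof (exp_pos (- beta * (t - t0))).
    replace (cc * (dl * dl) / (1/2 - beta)) with ((cc / (1/2 - beta)) * (dl * dl)) in HV by (field; lra).
    unfold K1. fold cc. nra. }
  assert (H4 : forall t, t0 <= t <= T -> (c4 (x t) - w t) * (c4 (x t) - w t) <= K4 * (dl * dl) * exp (- beta * (t - t0))).
  { intros t Ht.
    set (cc := b4 * (d4 * d4) * (W1 * W1) * K2).
    assert (Hcc : 0 <= cc).
    { unfold cc. pose proof W1_pos. pose proof (sq_nonneg d4). assert (0 <= b4 * (d4 * d4)) by nra.
      assert (0 <= b4 * (d4 * d4) * (W1 * W1)) by (apply Rmult_le_pos; nra). nra. }
    assert (HV : (c4 (x t) - w t) * (c4 (x t) - w t) <= ((c4 (x t0) - w t0) * (c4 (x t0) - w t0) + cc * (dl * dl) / (b4 - beta)) * exp (- beta * (t - t0))).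
    { apply (GL (fun s => (c4 (x s) - w s) * (c4 (x s) - w s))
             (fun s => 2 * (c4 (x s) - w s) * (b4 * (- (c4 (x s) - w s) - d4 * c4 (x s) * c2 (x s)))) b4 (cc * (dl * dl)) beta t0 t).
      - lra.
      - apply Rmult_le_pos; [exact Hcc|apply sq_nonneg].
      - lra.
      - apply sq_nonneg.
      - intros s Hs. apply (der_sq (fun s => c4 (x s) - w s)). eapply deriv_eq.
        apply (der_minus (fun s => c4 (x s)) w). apply D4; lra. apply Hw; lra. ring.
      - intros s Hs.
        pose proof (L_e4 (c4 (x s) - w s) b4 d4 (c4 (x s)) (c2 (x s)) Hb4) as L.
        eapply Rle_trans. exact L.
        pose proof (H2 s ltac:(lra)).
        pose proof (u4_bound (x s) s r0 ltac:(lra) Hr0 (Hreg s ltac:(lra))) as U4.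
        apply abs_sq_le in U4. pose proof W1_pos. pose proof (sq_nonneg d4). pose proof (sq_nonneg (c2 (x s))).
        assert (0 <= b4 * (d4 * d4)) by nra.
        assert (b4 * (d4 * d4) * (c4 (x s) * c4 (x s)) * (c2 (x s) * c2 (x s)) <=
                b4 * (d4 * d4) * (W1 * W1) * (K2 * (dl * dl) * exp (- beta * (s - t0)))).
        { apply Rmult_le_compat; try nra. }
        unfold cc. nra.
      - unfold rc. apply lim_mult; apply lim_minus; auto; apply w_rc; auto. }
    pose proof (exp_pos (- beta * (t - t0))).
    replace (cc * (dl * dl) / (b4 - beta)) with ((cc / (b4 - beta)) * (dl * dl)) in HV by (field; lra).
    unfold K4. fold cc. nra. }
  intros t Ht. pose proof (exp_pos (- beta * (t - t0))). pose proof (sq_nonneg dl).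
  assert (Hm : forall K, K <= Sc -> K * (dl * dl) * exp (- beta * (t - t0)) <= Sc * (dl * dl) * exp (- beta * (t - t0))).
  { intros K HK. apply Rmult_le_compat_r; [lra|]. apply Rmult_le_compat_r; lra. }
  repeat split.
  - eapply Rle_trans; [apply H1; auto| apply Hm; auto].
  - eapply Rle_trans; [apply H2; auto| apply Hm; auto].
  - eapply Rle_trans; [apply H3; auto| apply Hm; auto].
  - eapply Rle_trans; [apply H4; auto| apply Hm; auto].
Qed.

Definition Bx := W1 + 1.
Definition cl (y : R) := Rmax (- Bx) (Rmin Bx y).

Lemma Bx_pos : 2 <= Bx.
Proof. unfold Bx. pose proof W1_pos. lra. Qed.

Lemma cl_bound y : Rabs (cl y) <= Bx.
Proof. pose proof Bx_pos. unfold cl, Rmax, Rmin. repeat destruct Rle_dec; apply Rabs_le; lra. Qed.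

Lemma cl_lip y z : Rabs (cl y - cl z) <= Rabs (y - z).
Proof. pose proof Bx_pos. unfold cl, Rmax, Rmin. repeat destruct Rle_dec;
  unfold Rabs; repeat match goal with |- context [Rcase_abs ?x] => destruct (Rcase_abs x) end; lra. Qed.

Lemma cl_id y : Rabs y <= Bx -> cl y = y.
Proof. intros H. apply Rabs_le_between in H. unfold cl, Rmax, Rmin. repeat destruct Rle_dec; lra. Qed.

Lemma cl_cont y : continuous cl y.
Proof. apply cont_of_eps. intros eps Heps. exists eps. split; auto. intros z Hz.
  eapply Rle_lt_trans. apply cl_lip. auto. Qed.

Definition G (s : R) (y : state) : state :=
  let v1 := cl (c1 y) in let v2 := cl (c2 y) in let v3 := cl (c3 y) in let v4 := cl (c4 y) in
  (v1 * (1 - v1 - a1 * v2 - d1 * v3), b2 * v2 * (1 - v2 - a2 * v1 - d2 * v4), b3 * (v2 - v3),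
   b4 * (it s - v4 - d4 * v4 * v2)).

Definition L1 := Bx * (1 + a1 + d1) + (1 + Bx + a1 * Bx + d1 * Bx).
Definition L2 := b2 * Bx * (1 + a2 + d2) + (1 + Bx + a2 * Bx + d2 * Bx) * b2.
Definition L3 := 2 * b3.
Definition L4 := b4 * (1 + 2 * d4 * Bx).
Definition LG := L1 + L2 + L3 + L4 + 1.

Definition M1 := Bx * (1 + Bx + a1 * Bx + d1 * Bx).
Definition M2 := b2 * Bx * (1 + Bx + a2 * Bx + d2 * Bx).
Definition M3 := 2 * b3 * Bx.
Definition M4 := b4 * (Rabs iM + Bx + d4 * Bx * Bx).
Definition MG := M1 + M2 + M3 + M4.

Lemma L_pos : 0 <= L1 /\ 0 <= L2 /\ 0 <= L3 /\ 0 <= L4.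
Proof. pose proof Bx_pos. unfold L1, L2, L3, L4.
  assert (0 <= a1 * Bx) by nra. assert (0 <= d1 * Bx) by nra. assert (0 <= a2 * Bx) by nra.
  assert (0 <= d2 * Bx) by nra. assert (0 <= d4 * Bx) by nra. assert (0 <= b2 * Bx) by nra.
  repeat split; nra. Qed.

Lemma M_pos : 0 <= M1 /\ 0 <= M2 /\ 0 <= M3 /\ 0 <= M4.
Proof. pose proof Bx_pos. unfold M1, M2, M3, M4. pose proof (Rabs_pos iM).
  assert (0 <= a1 * Bx) by nra. assert (0 <= d1 * Bx) by nra. assert (0 <= a2 * Bx) by nra.
  assert (0 <= d2 * Bx) by nra. assert (0 <= d4 * Bx * Bx) by (apply Rmult_le_pos; nra). assert (0 <= b2 * Bx) by nra.
  repeat split; try nra. all: apply Rmult_le_pos; lra. Qed.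

Lemma G_lip c s y z : In c comps -> Rabs (c (G s y) - c (G s z)) <= LG * ndist y z.
Proof.
  intros Hc. set (D := ndist y z).
  assert (HD : 0 <= D) by (eapply Rle_trans; [apply Rabs_pos|apply (ndist_c y z c1); simpl; auto]).
  assert (E1 : Rabs (cl (c1 y) - cl (c1 z)) <= D) by (eapply Rle_trans; [apply cl_lip|apply ndist_c; simpl; auto]).
  assert (E2 : Rabs (cl (c2 y) - cl (c2 z)) <= D) by (eapply Rle_trans; [apply cl_lip|apply ndist_c; simpl; auto]).
  assert (E3 : Rabs (cl (c3 y) - cl (c3 z)) <= D) by (eapply Rle_trans; [apply cl_lip|apply ndist_c; simpl; auto]).
  assert (E4 : Rabs (cl (c4 y) - cl (c4 z)) <= D) by (eapply Rle_trans; [apply cl_lip|apply ndist_c; simpl; auto]).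
  pose proof (cl_bound (c1 y)) as B1. pose proof (cl_bound (c2 y)) as B2.
  pose proof (cl_bound (c3 y)) as B3. pose proof (cl_bound (c4 y)) as B4.
  pose proof (cl_bound (c1 z)) as B1'. pose proof (cl_bound (c2 z)) as B2'.
  pose proof (cl_bound (c3 z)) as B3'. pose proof (cl_bound (c4 z)) as B4'.
  pose proof L_pos as [P1 [P2 [P3 P4]]]. pose proof Bx_pos.
  set (u1 := cl (c1 y)) in *. set (u2 := cl (c2 y)) in *. set (u3 := cl (c3 y)) in *. set (u4 := cl (c4 y)) in *.
  set (v1 := cl (c1 z)) in *. set (v2 := cl (c2 z)) in *. set (v3 := cl (c3 z)) in *. set (v4 := cl (c4 z)) in *.
  assert (Habs3 : forall a b e, Rabs (a + b + e) <= Rabs a + Rabs b + Rabs e).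
  { intros a b e. eapply Rle_trans. apply Rabs_triang. pose proof (Rabs_triang a b). lra. }
  assert (HK : forall K, 0 <= K -> K <= LG -> K * D <= LG * D) by (intros; apply Rmult_le_compat_r; auto).
  simpl in Hc. destruct Hc as [Hc|[Hc|[Hc|[Hc|Hc]]]]; try contradiction; subst c; unfold G; simpl; fold u1 u2 u3 u4 v1 v2 v3 v4.
  - eapply Rle_trans. apply (prod_lip _ _ _ _ Bx (1 + Bx + a1 * Bx + d1 * Bx)); auto.
    { replace (1 - v1 - a1 * v2 - d1 * v3) with (1 + - v1 + - (a1 * v2) + - (d1 * v3)) by ring.
      eapply Rle_trans. eapply Rle_trans. apply Rabs_triang. apply Rplus_le_compat_r. apply Habs3.
      rewrite !Rabs_Ropp, !Rabs_mult, Rabs_R1, (Rabs_right a1), (Rabs_right d1) by lra. nra. }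
    assert (Rabs (1 - u1 - a1 * u2 - d1 * u3 - (1 - v1 - a1 * v2 - d1 * v3)) <= (1 + a1 + d1) * D).
    { replace (1 - u1 - a1 * u2 - d1 * u3 - (1 - v1 - a1 * v2 - d1 * v3)) with
        (- (u1 - v1) + - (a1 * (u2 - v2)) + - (d1 * (u3 - v3))) by ring.
      eapply Rle_trans. apply Habs3. rewrite !Rabs_Ropp, !Rabs_mult, (Rabs_right a1), (Rabs_right d1) by lra. nra. }
    apply Rle_trans with (L1 * D).
    { eapply Rle_trans. apply lin2; [lra| |eassumption|exact E1]. nra. unfold L1. right; ring. }
    apply HK; auto. unfold LG; lra.
  - eapply Rle_trans. apply (prod_lip _ _ _ _ (b2 * Bx) (1 + Bx + a2 * Bx + d2 * Bx)).
    { rewrite Rabs_mult, (Rabs_right b2) by lra. apply Rmult_le_compat_l; lra. }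
    { replace (1 - v2 - a2 * v1 - d2 * v4) with (1 + - v2 + - (a2 * v1) + - (d2 * v4)) by ring.
      eapply Rle_trans. eapply Rle_trans. apply Rabs_triang. apply Rplus_le_compat_r. apply Habs3.
      rewrite !Rabs_Ropp, !Rabs_mult, Rabs_R1, (Rabs_right a2), (Rabs_right d2) by lra. nra. }
    assert (Rabs (1 - u2 - a2 * u1 - d2 * u4 - (1 - v2 - a2 * v1 - d2 * v4)) <= (1 + a2 + d2) * D).
    { replace (1 - u2 - a2 * u1 - d2 * u4 - (1 - v2 - a2 * v1 - d2 * v4)) with
        (- (u2 - v2) + - (a2 * (u1 - v1)) + - (d2 * (u4 - v4))) by ring.
      eapply Rle_trans. apply Habs3. rewrite !Rabs_Ropp, !Rabs_mult, (Rabs_right a2), (Rabs_right d2) by lra. nra. }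
    assert (Rabs (b2 * u2 - b2 * v2) <= b2 * D).
    { replace (b2 * u2 - b2 * v2) with (b2 * (u2 - v2)) by ring. rewrite Rabs_mult, Rabs_right by lra. nra. }
    apply Rle_trans with (L2 * D).
    { assert (0 <= 1 + Bx + a2 * Bx + d2 * Bx) by nra. assert (0 <= b2 * Bx) by nra.
      eapply Rle_trans. apply lin2; [lra|lra|eassumption|eassumption]. unfold L2. right; ring. }
    apply HK; auto. unfold LG; lra.
  - replace (b3 * (u2 - u3) - b3 * (v2 - v3)) with (b3 * ((u2 - v2) - (u3 - v3))) by ring.
    rewrite Rabs_mult, (Rabs_right b3) by lra.
    assert (Rabs ((u2 - v2) - (u3 - v3)) <= 2 * D).
    { replace ((u2 - v2) - (u3 - v3)) with ((u2 - v2) + - (u3 - v3)) by ring. eapply Rle_trans. apply Rabs_triang. rewrite Rabs_Ropp. lra. }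
    apply Rle_trans with (L3 * D). unfold L3. nra. apply HK; auto. unfold LG; lra.
  - replace (b4 * (it s - u4 - d4 * u4 * u2) - b4 * (it s - v4 - d4 * v4 * v2)) with
      (b4 * (- (u4 - v4) + - (d4 * (u4 * u2 - v4 * v2)))) by ring.
    rewrite Rabs_mult, (Rabs_right b4) by lra.
    assert (Rabs (u4 * u2 - v4 * v2) <= Bx * D + Bx * D).
    { eapply Rle_trans. apply (prod_lip _ _ _ _ Bx Bx); auto. nra. }
    assert (Rabs (- (u4 - v4) + - (d4 * (u4 * u2 - v4 * v2))) <= (1 + 2 * d4 * Bx) * D).
    { eapply Rle_trans. apply Rabs_triang. rewrite !Rabs_Ropp, Rabs_mult, (Rabs_right d4) by lra. nra. }
    apply Rle_trans with (L4 * D). unfold L4. nra. apply HK; auto. unfold LG; lra.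
Qed.

Lemma G_bd c s y : In c comps -> Rabs (c (G s y)) <= MG.
Proof.
  intros Hc.
  pose proof (cl_bound (c1 y)) as B1. pose proof (cl_bound (c2 y)) as B2.
  pose proof (cl_bound (c3 y)) as B3. pose proof (cl_bound (c4 y)) as B4.
  pose proof M_pos as [P1 [P2 [P3 P4]]]. pose proof Bx_pos. pose proof (it_bound s). pose proof (Rabs_pos iM).
  pose proof (Rle_abs iM).
  set (u1 := cl (c1 y)) in *. set (u2 := cl (c2 y)) in *. set (u3 := cl (c3 y)) in *. set (u4 := cl (c4 y)) in *.
  assert (Habs3 : forall a b e, Rabs (a + b + e) <= Rabs a + Rabs b + Rabs e).
  { intros a b e. eapply Rle_trans. apply Rabs_triang. pose proof (Rabs_triang a b). lra. }
  assert (HK : forall K, K <= M1 \/ K <= M2 \/ K <= M3 \/ K <= M4 -> K <= MG) by (intros; unfold MG; lra).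
  simpl in Hc. destruct Hc as [Hc|[Hc|[Hc|[Hc|Hc]]]]; try contradiction; subst c; unfold G; simpl; fold u1 u2 u3 u4;
    apply HK.
  - left. rewrite Rabs_mult. unfold M1. apply Rmult_le_compat; try apply Rabs_pos; auto.
    replace (1 - u1 - a1 * u2 - d1 * u3) with (1 + - u1 + - (a1 * u2) + - (d1 * u3)) by ring.
    eapply Rle_trans. eapply Rle_trans. apply Rabs_triang. apply Rplus_le_compat_r. apply Habs3.
    rewrite !Rabs_Ropp, !Rabs_mult, Rabs_R1, (Rabs_right a1), (Rabs_right d1) by lra. nra.
  - right; left. rewrite (Rabs_mult (b2 * u2)). unfold M2. apply Rmult_le_compat; try apply Rabs_pos.
    rewrite Rabs_mult, (Rabs_right b2) by lra. apply Rmult_le_compat_l; lra.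
    replace (1 - u2 - a2 * u1 - d2 * u4) with (1 + - u2 + - (a2 * u1) + - (d2 * u4)) by ring.
    eapply Rle_trans. eapply Rle_trans. apply Rabs_triang. apply Rplus_le_compat_r. apply Habs3.
    rewrite !Rabs_Ropp, !Rabs_mult, Rabs_R1, (Rabs_right a2), (Rabs_right d2) by lra. nra.
  - right; right; left. rewrite Rabs_mult, (Rabs_right b3) by lra. unfold M3.
    replace (2 * b3 * Bx) with (b3 * (2 * Bx)) by ring. apply Rmult_le_compat_l; [lra|].
    replace (u2 - u3) with (u2 + - u3) by ring. eapply Rle_trans. apply Rabs_triang. rewrite Rabs_Ropp. lra.
  - right; right; right. rewrite Rabs_mult, (Rabs_right b4) by lra. unfold M4.
    apply Rmult_le_compat_l; [lra|].
    replace (it s - u4 - d4 * u4 * u2) with (it s + - u4 + - (d4 * u4 * u2)) by ring.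
    eapply Rle_trans. apply Habs3. rewrite !Rabs_Ropp, !Rabs_mult, (Rabs_right d4), (Rabs_right (it s)) by lra.
    assert (Rabs u4 * Rabs u2 <= Bx * Bx) by (apply Rmult_le_compat; auto; apply Rabs_pos).
    assert (d4 * (Rabs u4 * Rabs u2) <= d4 * (Bx * Bx)) by (apply Rmult_le_compat_l; lra).
    nra.
Qed.

Lemma G_cont (X : R -> state) : (forall c, In c comps -> contR (fun s => c (X s))) ->
  forall c, In c comps -> contR (fun s => c (G s (X s))).
Proof.
  intros HX c Hc s.
  assert (C : forall c, In c comps -> continuous (fun s => cl (c (X s))) s).
  { intros c' Hc'. unfold continuous. apply (lim_comp (fun s => c' (X s)) cl). apply HX; auto. apply cl_cont. }
  pose proof (C c1 In1) as C1. pose proof (C c2 In2) as C2. pose proof (C c3 In3) as C3. pose proof (C c4 In4) as C4.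
  unfold continuous in *.
  simpl in Hc. destruct Hc as [Hc|[Hc|[Hc|[Hc|Hc]]]]; try contradiction; subst c; unfold G; simpl.
  - apply lim_mult; auto. repeat apply lim_minus; auto; try apply lim_const; apply lim_mult; auto; apply lim_const.
  - apply lim_mult. apply lim_mult; auto; apply lim_const.
    repeat apply lim_minus; auto; try apply lim_const; apply lim_mult; auto; apply lim_const.
  - apply lim_mult. apply lim_const. apply lim_minus; auto.
  - apply lim_mult. apply lim_const. repeat apply lim_minus; auto. apply it_cont.
    apply lim_mult; auto. apply lim_mult; auto. apply lim_const.
Qed.

Lemma G_F s y : 0 <= s -> ndist y (p s) <= 1/2 -> G s y = F s y.
Proof.
  intros Hs H. destruct (ndist_le y s (1/2) H) as [H1 [H2 [H3 H4]]].
  pose proof (u4_bound y s (1/2) Hs ltac:(lra) H) as U4. pose proof Bx_pos.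
  assert (E1 : cl (c1 y) = c1 y). { apply cl_id. apply Rabs_le_between in H1. apply Rabs_le. lra. }
  assert (E2 : cl (c2 y) = c2 y) by (apply cl_id; lra).
  assert (E3 : cl (c3 y) = c3 y) by (apply cl_id; lra).
  assert (E4 : cl (c4 y) = c4 y) by (apply cl_id; unfold Bx; lra).
  unfold G. rewrite E1, E2, E3, E4, it_eq by auto.
  destruct y as [[[y1 y2] y3] y4]. reflexivity.
Qed.

Lemma g_lim {Fl : (R -> Prop) -> Prop} {FFl : Filter Fl} (x : R -> state) s0 :
  (forall c, In c comps -> filterlim (fun s => c (x s)) Fl (locally (c (x s0)))) ->
  filterlim w Fl (locally (w s0)) ->
  filterlim (fun s => ndist (x s) (p s)) Fl (locally (ndist (x s0) (p s0))).
Proof.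
  intros Hx Hw'. rewrite ndist_p.
  apply (lim_ext (fun s => Rmax (Rmax (Rabs (c1 (x s) - 1)) (Rabs (c2 (x s)))) (Rmax (Rabs (c3 (x s))) (Rabs (c4 (x s) - w s))))).
  intros; rewrite ndist_p; reflexivity.
  apply lim_Rmax; apply lim_Rmax; apply lim_Rabs; try apply lim_minus; try apply lim_const; auto;
   apply Hx; simpl; auto.
Qed.

Definition eta := r0 / (2 * (Sc + 1)).

Lemma Sc_pos : 0 < gam -> 1 <= Sc.
Proof. intros Hg. destruct (K_facts Hg) as [H _]. destruct Sc_ge as [_ [H2 _]]. lra. Qed.

Lemma eta_pos : 0 < gam -> 0 < eta.
Proof. intros Hg. pose proof (Sc_pos Hg). unfold eta. apply Rdiv_lt_0_compat. apply r0_pos; lra. lra. Qed.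

Lemma core x t0 : 0 < gam -> 0 <= t0 ->
  (forall c, In c comps -> rc (fun s => c (x s)) t0) ->
  (forall c, In c comps -> forall s, t0 < s -> continuous (fun s => c (x s)) s) ->
  (forall T, t0 <= T -> (forall s, t0 <= s <= T -> ndist (x s) (p s) <= r0) -> solT x t0 T) ->
  ndist (x t0) (p t0) < eta ->
  forall t, t0 <= t -> ndist (x t) (p t) <= r0 / 2 /\
  (c1 (x t) - 1) * (c1 (x t) - 1) <= Sc * (ndist (x t0) (p t0) * ndist (x t0) (p t0)) * exp (- beta * (t - t0)) /\
  c2 (x t) * c2 (x t) <= Sc * (ndist (x t0) (p t0) * ndist (x t0) (p t0)) * exp (- beta * (t - t0)) /\
  c3 (x t) * c3 (x t) <= Sc * (ndist (x t0) (p t0) * ndist (x t0) (p t0)) * exp (- beta * (t - t0)) /\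
  (c4 (x t) - w t) * (c4 (x t) - w t) <= Sc * (ndist (x t0) (p t0) * ndist (x t0) (p t0)) * exp (- beta * (t - t0)).
Proof.
  intros Hg Ht0 Hrc Hct Hsol Hd.
  pose proof (Sc_pos Hg) as HS. pose proof (r0_pos ltac:(lra)) as Hr0. pose proof (eta_pos Hg) as He.
  set (dl := ndist (x t0) (p t0)) in *.
  assert (Hdl : 0 <= dl) by (unfold dl, ndist; eapply Rle_trans; [apply Rabs_pos|eapply Rle_trans; [apply Rmax_l|apply Rmax_l]]).
  assert (Hsmall : Sc * (dl * dl) <= (r0 / 2) * (r0 / 2)).
  { assert (dl * dl <= eta * eta) by nra. unfold eta in H.
    replace (r0 / (2 * (Sc + 1)) * (r0 / (2 * (Sc + 1)))) with ((r0 / 2) * (r0 / 2) / ((Sc + 1) * (Sc + 1))) in H by (field; lra).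
    assert (Sc * (dl * dl) <= Sc * ((r0 / 2) * (r0 / 2) / ((Sc + 1) * (Sc + 1)))) by (apply Rmult_le_compat_l; lra).
    assert (Sc * ((r0 / 2) * (r0 / 2) / ((Sc + 1) * (Sc + 1))) <= (r0 / 2) * (r0 / 2)).
    { apply (Rmult_le_reg_r ((Sc + 1) * (Sc + 1))). nra.
      replace (Sc * (r0 / 2 * (r0 / 2) / ((Sc + 1) * (Sc + 1))) * ((Sc + 1) * (Sc + 1))) with (Sc * (r0 / 2 * (r0 / 2))) by (field; lra).
      assert (0 <= r0 / 2 * (r0 / 2)) by nra. nra. }
    lra. }
  assert (Hb : forall t, t0 <= t -> ndist (x t) (p t) <= r0 / 2).
  { apply (boot (fun s => ndist (x s) (p s)) t0 r0 Hr0).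
    - split.
      + unfold rc. apply g_lim. intros c Hc; apply Hrc; auto. apply w_rc; auto.
      + intros s Hs. unfold continuous. apply g_lim. intros c Hc; apply Hct; auto. apply w_cont; lra.
    - fold dl. unfold eta in Hd. assert (r0 / (2 * (Sc + 1)) < r0).
      { apply (Rmult_lt_reg_r (2 * (Sc + 1))). lra. unfold Rdiv. rewrite Rmult_assoc, Rinv_l, Rmult_1_r by lra. nra. }
      lra.
    - intros T HT Hreg s Hs.
      destruct (est x t0 T Hg Ht0 HT (Hsol T HT Hreg) Hreg s Hs) as [E1 [E2 [E3 E4]]]. fold dl in E1, E2, E3, E4.
      pose proof (exp_le1 (- beta * (s - t0))). destruct (beta_facts Hg) as [B0 _].
      assert (HE : exp (- beta * (s - t0)) <= 1) by (apply exp_le1; nra).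
      pose proof (exp_pos (- beta * (s - t0))).
      assert (Sc * (dl * dl) * exp (- beta * (s - t0)) <= Sc * (dl * dl)).
      { assert (0 <= Sc * (dl * dl)) by nra. nra. }
      apply ndist_le2; apply sq_abs_le; lra. }
  intros t Ht. split. apply Hb; auto.
  apply (est x t0 t Hg Ht0 Ht). apply Hsol; auto. intros s Hs. pose proof (Hb s ltac:(lra)). lra.
  intros s Hs. pose proof (Hb s ltac:(lra)). lra. lra.
Qed.

Lemma sol_hyps x t0 : is_sol F t0 p_infty x ->
  (forall c, In c comps -> rc (fun s => c (x s)) t0) /\
  (forall c, In c comps -> forall s, t0 < s -> continuous (fun s => c (x s)) s) /\
  (forall T, solT x t0 T).
Proof.
  intros H. split; [|split].
  - intros c Hc. apply (H c Hc).
  - intros c Hc s Hs. apply (@ex_derive_continuous R_AbsRing R_NormedModule). eexists. apply (H c Hc); simpl; auto.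
  - intros T. split. intros s Hs c Hc. apply (H c Hc). lra. simpl; auto. intros c Hc; apply (H c Hc).
Qed.

Lemma LG_pos : 0 < LG.
Proof. unfold LG. pose proof L_pos. lra. Qed.
Lemma MG_pos : 0 <= MG.
Proof. unfold MG. pose proof M_pos. lra. Qed.

Lemma exist_sol t0 x0 : 0 < gam -> 0 <= t0 -> ndist x0 (p t0) < eta ->
  exists x, is_sol F t0 p_infty x /\ x t0 = x0.
Proof.
  intros Hg Ht0 Hd.
  destruct (picard_exists G LG MG LG_pos MG_pos (fun c Hc s y z => G_lip c s y z Hc) (fun c Hc s y => G_bd c s y Hc) G_cont t0 x0)
    as [X [HX0 [HXc HXd]]].
  pose proof r0_le as Hr0.
  assert (Hcore := core X t0 Hg Ht0).
  assert (Hb : forall t, t0 <= t -> ndist (X t) (p t) <= r0 / 2).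
  { intros t Ht. apply Hcore; auto.
    - intros c Hc. apply cont_rc. apply HXc; auto.
    - intros c Hc s Hs. apply HXc; auto.
    - intros T HT Hreg. split.
      + intros s Hs c Hc. rewrite <- G_F. apply HXd; auto. lra. lra. pose proof (Hreg s ltac:(lra)). lra.
      + intros c Hc. apply cont_rc. apply HXc; auto.
    - rewrite HX0; auto. }
  exists X. split; auto. intros c Hc. split.
  - intros t Ht _. rewrite <- G_F. apply HXd; auto. lra. pose proof (Hb t ltac:(lra)). pose proof (r0_pos ltac:(lra)). lra.
  - apply cont_rc. apply HXc; auto.
Qed.

Lemma ndist_from_sq y s e : 0 < e ->
  (c1 y - 1) * (c1 y - 1) < e * e -> c2 y * c2 y < e * e -> c3 y * c3 y < e * e ->
  (c4 y - w s) * (c4 y - w s) < e * e -> ndist y (p s) < e.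
Proof.
  intros He H1 H2 H3 H4. apply ndist_lt; apply Rabs_def1; nra.
Qed.

Lemma stable_thm : a2 + d2 > 1 -> unif_asym_stable F p.
Proof.
  intros Hgt. assert (Hg : 0 < gam) by (unfold gam; lra).
  pose proof (Sc_pos Hg) as HS. pose proof (eta_pos Hg) as He. destruct (beta_facts Hg) as [B0 _].
  assert (Hdl : forall y s, 0 <= ndist y (p s)).
  { intros. unfold ndist. eapply Rle_trans; [apply Rabs_pos|eapply Rle_trans; [apply Rmax_l|apply Rmax_l]]. }
  split.
  - intros eps Heps. exists (Rmin eta (eps / (Sc + 1))). split.
    { apply Rmin_glb_lt; auto. apply Rdiv_lt_0_compat; lra. }
    intros t0 Ht0 x0 Hx0.
    assert (Hx0e : ndist x0 (p t0) < eta) by (eapply Rlt_le_trans; [exact Hx0|apply Rmin_l]).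
    assert (Hx0f : ndist x0 (p t0) < eps / (Sc + 1)) by (eapply Rlt_le_trans; [exact Hx0|apply Rmin_r]).
    split. apply exist_sol; auto.
    intros x Hx Hxt0 t Ht. destruct (sol_hyps x t0 Hx) as [Hr [Hc Hs]].
    subst x0.
    destruct (core x t0 Hg Ht0 Hr Hc (fun T _ _ => Hs T) Hx0e t Ht) as [_ [E1 [E2 [E3 E4]]]].
    set (dl := ndist (x t0) (p t0)) in *. pose proof (Hdl (x t0) t0). fold dl in H.
    assert (HE : exp (- beta * (t - t0)) <= 1) by (apply exp_le1; nra).
    pose proof (exp_pos (- beta * (t - t0))).
    assert (Hk : Sc * (dl * dl) * exp (- beta * (t - t0)) < eps * eps).
    { assert (dl * (Sc + 1) < eps).
      { apply (Rmult_lt_compat_r (Sc + 1)) in Hx0f; [|lra]. unfold Rdiv in Hx0f.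
        rewrite Rmult_assoc, Rinv_l, Rmult_1_r in Hx0f by lra. exact Hx0f. }
      assert (Sc * (dl * dl) < eps * eps).
      { assert (Sc * (dl * dl) <= (dl * (Sc + 1)) * (dl * (Sc + 1))) by nra.
        destruct (Req_dec dl 0) as [->|Hne]. nra.
        assert ((dl * (Sc + 1)) * (dl * (Sc + 1)) < eps * eps).
        { assert (0 < dl * (Sc + 1)) by (assert (0 < dl) by lra; nra). nra. }
        lra. }
      assert (0 <= Sc * (dl * dl)) by nra. nra. }
    apply ndist_from_sq; lra.
  - exists eta. split; auto. split.
    + intros t0 x0 Ht0 Hx0. apply exist_sol; auto.
    + intros eps Heps.
      set (A := Sc * (eta * eta)).
      assert (HA : 0 <= A) by (unfold A; nra).
      set (q := eps * eps / (A + 1)).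
      assert (Hq : 0 < q) by (unfold q; apply Rdiv_lt_0_compat; nra).
      exists ((Rabs (ln q) + 1) / beta). split.
      { apply Rdiv_lt_0_compat; auto. pose proof (Rabs_pos (ln q)). lra. }
      intros t0 Ht0 x Hx Hxt0 t Ht.
      destruct (sol_hyps x t0 Hx) as [Hr [Hc Hs]].
      destruct (core x t0 Hg Ht0 Hr Hc (fun T _ _ => Hs T) Hxt0 t ltac:(pose proof (Rabs_pos (ln q)); 
        assert (0 < (Rabs (ln q) + 1) / beta) by (apply Rdiv_lt_0_compat; lra); lra)) as [_ [E1 [E2 [E3 E4]]]].
      set (dl := ndist (x t0) (p t0)) in *. pose proof (Hdl (x t0) t0). fold dl in H.
      assert (HT : - beta * (t - t0) < ln q).
      { assert (beta * (t - t0) >= beta * ((Rabs (ln q) + 1) / beta)) by (apply Rle_ge, Rmult_le_compat_l; lra).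
        replace (beta * ((Rabs (ln q) + 1) / beta)) with (Rabs (ln q) + 1) in H0 by (field; lra).
        pose proof (Rle_abs (- ln q)). rewrite Rabs_Ropp in H1. lra. }
      assert (HE : exp (- beta * (t - t0)) < q) by (rewrite <- (exp_ln q) by auto; apply exp_increasing; auto).
      pose proof (exp_pos (- beta * (t - t0))).
      assert (Hk : Sc * (dl * dl) * exp (- beta * (t - t0)) < eps * eps).
      { assert (Sc * (dl * dl) <= A) by (unfold A; apply Rmult_le_compat_l; nra).
        assert (Sc * (dl * dl) * exp (- beta * (t - t0)) <= A * q).
        { apply Rmult_le_compat; try nra. }
        assert (A * q < (A + 1) * q) by nra.
        assert ((A + 1) * q = eps * eps) by (unfold q; field; lra). lra. }
      apply ndist_from_sq; lra.
Qed.

Lemma unstable_thm : a2 + d2 < 1 -> lyap_unstable F p.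
Proof.
  intros Hlt Hst. assert (Hg : gam < 0) by (unfold gam; lra).
  pose proof (r0_pos ltac:(lra)) as Hr0. pose proof r0_le as Hr0'.
  destruct (Hst r0 Hr0 0 (Rle_refl 0)) as [delta [Hdel Hdd]].
  set (d0 := Rmin (delta / 2) (r0 / 2)).
  assert (Hd0 : 0 < d0) by (unfold d0; apply Rmin_glb_lt; lra).
  assert (Hd0' : d0 < delta) by (unfold d0; eapply Rle_lt_trans; [apply Rmin_l|lra]).
  set (x0 := (1, d0, 0, w 0) : state).
  assert (Hx0 : ndist x0 (p 0) < delta).
  { unfold ndist, x0, p; simpl. replace (1 - 1) with 0 by ring. rewrite !Rminus_0_r, Rminus_diag, !Rabs_R0, (Rabs_right d0) by lra.
    rewrite (Rmax_left 0 0) by lra. rewrite (Rmax_right 0 d0) by lra. rewrite Rmax_left by lra. lra. }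
  destruct (Hdd x0 Hx0) as [[x [Hx Hxt0]] Hall].
  specialize (Hall x Hx Hxt0).
  destruct (sol_hyps x 0 Hx) as [_ [_ Hs]].
  set (a := b2 * (- gam)).
  assert (Ha : 0 < a) by (unfold a; apply Rmult_lt_0_compat; lra).
  assert (Hgrow : forall t, 0 <= t -> Zf x 0 * exp (a * (t - 0)) <= Zf x t).
  { intros t Ht. apply (grow_lemma (Zf x) (fun s => 2 * b2 * Zf x s *
          (- gam - c2 (x s) - a2 * (c1 (x s) - 1) + d2 * d4 * c4 (x s) * c2 (x s))) a 0 t Ht).
    - intros s Hs'. apply (Zf_der x 0 t s); auto. lra.
    - intros s Hs'. pose proof (err_bound (x s) s r0 ltac:(lra) (Rle_refl _) ltac:(left; apply Hall; lra)) as He.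
      rewrite (Rabs_left gam) in He by lra. apply Rabs_le_between in He.
      assert (HZ0 : 0 <= Zf x s) by (unfold Zf; pose proof (exp_pos (2 * phi x s)); pose proof (sq_nonneg (c2 (x s))); nra).
      assert (Hq : - gam / 2 <= - gam - c2 (x s) - a2 * (c1 (x s) - 1) + d2 * d4 * c4 (x s) * c2 (x s)) by lra.
      assert (HZ1 : 0 <= 2 * b2 * Zf x s) by nra.
      apply Rle_trans with (2 * b2 * Zf x s * (- gam / 2)); [unfold a; nra| apply Rmult_le_compat_l; auto].
    - apply Zf_rc. apply Hs. }
  set (K := r0 * r0 * exp (2 * Phi) / (d0 * d0 * a)).
  assert (HK : 0 <= K) by (unfold K; apply Rdiv_le_0_compat; [left; apply Rmult_lt_0_compat; [apply Rmult_lt_0_compat; lra|apply exp_pos]| apply Rmult_lt_0_compat; [apply Rmult_lt_0_compat|]; lra]).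
  specialize (Hgrow K HK).
  assert (HK2 := Hall K HK). destruct (ndist_le (x K) K r0 ltac:(lra)) as [_ [H2 _]].
  apply abs_sq_le in H2.
  pose proof (phi_diff x 0 K (Rle_refl 0) HK ltac:(pose proof (Hall 0 (Rle_refl 0)); lra) ltac:(lra)) as Hphi.
  apply Rabs_le_between in Hphi.
  unfold Zf in Hgrow. rewrite Hxt0 in Hgrow. unfold x0 in Hgrow. simpl c2 in Hgrow.
  rewrite Rminus_0_r in Hgrow.
  assert (E1 : exp (a * K) >= 1 + a * K) by (apply Rle_ge, exp_ineq1_le).
  assert (E2 : 1 + a * K = 1 + r0 * r0 * exp (2 * Phi) / (d0 * d0)) by (unfold K; field; lra).
  assert (Hph : exp (2 * phi x 0) = exp (2 * phi x K) * exp (2 * (phi x 0 - phi x K))).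
  { rewrite <- exp_plus. f_equal. ring. }
  assert (Hph2 : exp (- (2 * Phi)) <= exp (2 * (phi x 0 - phi x K))) by (apply exp_mono; lra).
  assert (Hinv : exp (2 * Phi) * exp (- (2 * Phi)) = 1) by (rewrite <- exp_plus; replace (2 * Phi + - (2 * Phi)) with 0 by ring; apply exp_0).
  pose proof (exp_pos (2 * phi x K)). pose proof (exp_pos (2 * Phi)). pose proof (exp_pos (- (2 * Phi))).
  pose proof (exp_pos (a * K)). pose proof (exp_pos (2 * (phi x 0 - phi x K))).
  rewrite Hph in Hgrow.
  assert (Hg2 : d0 * d0 * exp (2 * (phi x 0 - phi x K)) * exp (a * K) <= c2 (x K) * c2 (x K)).
  { apply (Rmult_le_reg_r (exp (2 * phi x K))); auto. nra. }
  assert (Hg3 : d0 * d0 * exp (- (2 * Phi)) * (1 + r0 * r0 * exp (2 * Phi) / (d0 * d0)) <= c2 (x K) * c2 (x K)).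
  { eapply Rle_trans; [|exact Hg2]. rewrite <- E2. apply Rmult_le_compat; try nra. }
  replace (d0 * d0 * exp (- (2 * Phi)) * (1 + r0 * r0 * exp (2 * Phi) / (d0 * d0))) with
    (d0 * d0 * exp (- (2 * Phi)) + r0 * r0 * (exp (2 * Phi) * exp (- (2 * Phi)))) in Hg3 by (field; lra).
  rewrite Hinv in Hg3.
  assert (0 < d0 * d0 * exp (- (2 * Phi))) by (apply Rmult_lt_0_compat; nra).
  assert (HK3 : ndist (x K) (p K) < r0) by (apply Hall; auto).
  rewrite ndist_p in HK3.
  assert (Hab : Rabs (c2 (x K)) < r0).
  { eapply Rle_lt_trans; [|exact HK3]. eapply Rle_trans; [apply Rmax_r|apply Rmax_l]. }
  assert (c2 (x K) * c2 (x K) < r0 * r0).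
  { apply Rabs_def2 in Hab. nra. }
  lra.
Qed.

Lemma main_sec : is_sol F 0 p_infty p /\ (forall t, 0 <= t -> p (t + rho) = p t) /\
  (a2 + d2 > 1 -> unif_asym_stable F p) /\ (a2 + d2 < 1 -> lyap_unstable F p).
Proof.
  split; [apply p_sol|]. split; [apply p_per|]. split; [apply stable_thm|apply unstable_thm].
Qed.

End Main.


Theorem mainTheorem5 :
  forall (a1 a2 b2 b3 b4 d1 d2 d4 rho iM : R) (i w : R -> R),
    0 < a1 -> 0 < a2 -> 0 < b2 -> 0 < b3 -> 0 < b4 ->
    0 < d1 -> 0 < d2 -> 0 < d4 -> 0 < rho ->
    (forall t, 0 <= t ->
       filterlim i (within (fun s => 0 <= s) (locally t)) (locally (i t))) ->
    (forall t, 0 <= t -> 0 <= i t <= iM) ->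
    (forall t, 0 <= t -> i (t + rho) = i t) ->
    RInt i 0 rho / rho = 1 ->
    (forall t, 0 < t -> is_derive w t (b4 * (i t - w t))) ->
    (forall t, 0 <= t -> w (t + rho) = w t) ->
    let F := sysF a1 a2 b2 b3 b4 d1 d2 d4 i in
    let p := fun t : R => (1, 0, 0, w t) in
    is_sol F 0 p_infty p /\
    (forall t, 0 <= t -> p (t + rho) = p t) /\
    (a2 + d2 > 1 -> unif_asym_stable F p) /\
    (a2 + d2 < 1 -> lyap_unstable F p).
Proof.
  intros a1 a2 b2 b3 b4 d1 d2 d4 rho iM i w Ha1 Ha2 Hb2 Hb3 Hb4 Hd1 Hd2 Hd4 Hrho Hic Hib Hip Hmean Hw Hwp.
  exact (main_sec a1 a2 b2 b3 b4 d1 d2 d4 rho iM i w Ha1 Ha2 Hb2 Hb3 Hb4 Hd1 Hd2 Hd4 Hrho Hic Hib Hip Hmean Hw Hwp).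
Qed.
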